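(* Let $\mathfrak{A}$ be an atomic weakly associative relation algebra and let $\mathfrak{B}=\langle B,T_\kappa,E_{\kappa\lambda}\rangle_{\kappa,\lambda<3}$ be its suitable structure. Then $\mathfrak{Cm}\,\mathfrak{B}\cong\mathfrak{Rc}\,\mathfrak{B}$, via the map $R$ defined for $X\subseteq B$ by $R(X)=\bigcup_{t\in X}R_t$.
   Context: WA: algebras $\langle A,+,\overline{\phantom{x}},;,\breve{\phantom{x}},1'\rangle$ with $x\cdot y=\overline{\overline{x}+\overline{y}}$, $0'=\overline{1'}$, $1=1'+0'$, $0=\overline{1}$, satisfying for all $x,y,z$: $x+y=y+x$; $x+(y+z)=(x+y)+z$; $\overline{\overline{x}+\overline{y}}+\overline{\overline{x}+y}=x$; $((x\cdot 1');1);1=(x\cdot1');1$; $(x+y);z=x;z+y;z$; $x;1'=x$; $\breve{\breve{x}}=x$; $\breve{(x+y)}=\breve{x}+\breve{y}$; $\breve{(x;y)}=\breve{y};\breve{x}$; $\breve{x};\overline{x;y}+\overline{y}=\overline{y}$. $\mathrm{At}(\mathfrak{A})$ = set of atoms. Suitable structure: $B=\{s\in{}^3\mathrm{At}(\mathfrak{A}): s_2;s_0\ge s_1\}$; $T_\kappa=\{\langle s,t\rangle\in B\times B:s_\kappa=t_\kappa\}$; $E_{\kappa\kappa}=B$; for distinct $\kappa,\lambda$ with third index $\mu$, $E_{\kappa\lambda}=\{s\in B:s_\mu\le1'\}$. Complex algebra: $\mathfrak{Cm}\,\mathfrak{B}=\langle\mathcal{P}(B),\cup,\cap,B\setminus\cdot,\emptyset,B,T_\kappa^*,E_{\kappa\lambda}\rangle_{\kappa,\lambda<3}$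 with $T_\kappa^*(X)=\{y\in B:\exists x\in X\ \langle y,x\rangle\in T_\kappa\}$. Trails: a $\mathfrak{B}$-trail is $p=\langle t_0,\kappa_0,\dots,t_n,\kappa_n\rangle$, $n\in\omega$, $t_i\in B$, $\kappa_i<3$, with $t_i\ne t_{i+1}$ and $\langle t_i,t_{i+1}\rangle\in T_{\kappa_i}$ for $i<n$; it ends at $t_n$. $\mathrm{Tr}(\mathfrak{B})$ = set of trails; $p\lambda=\langle t_0,\kappa_0,\dots,t_n,\lambda\rangle$. $\approx$ is the smallest equivalence relation on $\mathrm{Tr}(\mathfrak{B})$ with (for trails of the displayed forms): (a) $\langle t_0,\kappa_0,\dots,t_i,\lambda,s,\lambda,t_i,\kappa_i,\dots,t_n,\kappa_n\rangle\approx\langle t_0,\kappa_0,\dots,t_i,\kappa_i,\dots,t_n,\kappa_n\rangle$; (b) $\langle t_0,\kappa_0,\dots,t_n,\lambda,s,\nu\rangle\approx\langle t_0,\kappa_0,\dots,t_n,\nu\rangle$ if $\lambda\ne\nu$; (c) $\langle t_0,\kappa_0,\dots,t_n,\lambda\rangle\approx\langle t_0,\kappa_0,\dots,t_n,\kappa_n\rangle$ if $t_n\in E_{\lambda\kappa_n}$. $p^{\mathfrak{B}}$ = $\approx$-class of $p$; $U(\mathfrak{B})=\{p^{\mathfrak{B}}:p\in\mathrm{Tr}(\mathfrak{B})\}$; $R_t=\{\langle(p0)^{\mathfrak{B}},(p1)^{\mathfrak{B}},(p2)^{\mathfrak{B}}\rangle:p\in\mathrm{Tr}(\mathfrak{B})\text{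 ends at }t\}$; $V(\mathfrak{B})=\bigcup_{t\in B}R_t$. Set algebras: the full 3-dimensional cylindric set algebra on $U$ is $\langle\mathcal{P}({}^3U),\cup,{}^3U\setminus\cdot,C_\kappa,D_{\kappa\lambda}\rangle_{\kappa,\lambda<3}$ with $C_\kappa X=\{v\in{}^3U:\exists u\in X\ \forall\lambda\ne\kappa\ u_\lambda=v_\lambda\}$ and $D_{\kappa\lambda}=\{v\in{}^3U:v_\kappa=v_\lambda\}$. Let $\mathfrak{C}$ be the subalgebra of the full cylindric set algebra on $U(\mathfrak{B})$ completely generated by $\{R_t:t\in B\}$ (closed under arbitrary unions). $\mathfrak{Rc}\,\mathfrak{B}$ is the relativization of $\mathfrak{C}$ to $V=V(\mathfrak{B})$: universe $\{X\in C:X\subseteq V\}$, operations $\cup$, $V\setminus\cdot$, $C^{[V]}_\kappa X=V\cap C_\kappa X$, constants $D^{[V]}_{\kappa\lambda}=V\cap D_{\kappa\lambda}$. *)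

(* Defs.v *)
From Stdlib Require Import List.
Import ListNotations.

Record WA := {
  car :> Type;
  plus : car -> car -> car;
  compl : car -> car;
  comp : car -> car -> car;
  conv : car -> car;
  id1 : car;
  wa_axioms :
    let meet x y := compl (plus (compl x) (compl y)) in
    let div := compl id1 in
    let one := plus id1 div in
    (forall x y, plus x y = plus y x) /\
    (forall x y z, plus x (plus y z) = plus (plus x y) z) /\
    (forall x y, plus (compl (plus (compl x) (compl y)))
                      (compl (plus (compl x) y)) = x) /\
    (forall x, comp (comp (meet x id1) one) one = comp (meet x id1) one) /\
    (forall x y z, comp (plus x y) z = plus (comp x z) (comp y z)) /\
    (forall x, comp x id1 = x) /\
    (forall x, conv (conv x) = x) /\
    (forall x y, conv (plus x y) = plus (conv x) (conv y)) /\
    (forall x y, conv (comp x y) = comp (conv y) (conv x)) /\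
    (forall x y, plus (comp (conv x) (compl (comp x y))) (compl y) = compl y)
}.

Section WAdefs.
Variable W : WA.

Definition meet (x y : W) : W := compl W (plus W (compl W x) (compl W y)).
Definition one : W := plus W (id1 W) (compl W (id1 W)).
Definition zero : W := compl W one.
Definition leq (x y : W) : Prop := plus W x y = y.
Definition atom (a : W) : Prop :=
  a <> zero /\ forall y, leq y a -> y = zero \/ y = a.
Definition atomic : Prop :=
  forall x : W, x <> zero -> exists a, atom a /\ leq a x.

End WAdefs.

Inductive I3 : Type := I0 | I1 | I2.

(* the third index mu for distinct kappa, lambda (arbitrary otherwise) *)
Definition third (k l : I3) : I3 :=
  match k, l with
  | I0, I1 | I1, I0 => I2
  | I0, I2 | I2, I0 => I1
  | I1, I2 | I2, I1 => I0
  | I0, I0 => I0 | I1, I1 => I1 | I2, I2 => I2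
  end.

Section Suitable.
Variable W : WA.

Definition tri : Type := I3 -> W.

Definition inB (s : tri) : Prop :=
  (forall k, atom W (s k)) /\ leq W (s I1) (comp W (s I2) (s I0)).

Definition T (k : I3) (s t : tri) : Prop := inB s /\ inB t /\ s k = t k.

Definition E (k l : I3) (s : tri) : Prop :=
  inB s /\ (k <> l -> leq W (s (third k l)) (id1 W)).

Definition subB (X : tri -> Prop) : Prop := forall s, X s -> inB s.
Definition Cm_union (X Y : tri -> Prop) : tri -> Prop := fun s => X s \/ Y s.
Definition Cm_inter (X Y : tri -> Prop) : tri -> Prop := fun s => X s /\ Y s.
Definition Cm_compl (X : tri -> Prop) : tri -> Prop := fun s => inB s /\ ~ X s.
Definition Cm_empty : tri -> Prop := fun _ => False.
Definition Cm_full : tri -> Prop := inB.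
Definition Tstar (k : I3) (X : tri -> Prop) : tri -> Prop :=
  fun y => inB y /\ exists x, X x /\ T k y x.

(* a trail <t_0,k_0,...,t_n,k_n> is the nonempty list [(t_0,k_0);...;(t_n,k_n)] *)
Definition rtrail := list (tri * I3).

Fixpoint valid_from (x : tri * I3) (r : rtrail) : Prop :=
  match r with
  | [] => True
  | y :: r' => inB (fst y) /\ fst x <> fst y /\ T (snd x) (fst x) (fst y)
               /\ valid_from y r'
  end.

Definition is_trail (p : rtrail) : Prop :=
  match p with
  | [] => False
  | x :: r => inB (fst x) /\ valid_from x r
  end.

Definition ends_at (p : rtrail) (t : tri) : Prop :=
  exists l k, p = l ++ [(t, k)].

Fixpoint setlast (p : rtrail) (lam : I3) : rtrail :=
  match p with
  | [] => []
  | [(t, _)] => [(t, lam)]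
  | x :: r => x :: setlast r lam
  end.

Inductive approx : rtrail -> rtrail -> Prop :=
| ap_refl p : is_trail p -> approx p p
| ap_sym p q : approx p q -> approx q p
| ap_trans p q r : approx p q -> approx q r -> approx p r
| ap_a l1 ti lam s ki l2 :
    is_trail (l1 ++ (ti, lam) :: (s, lam) :: (ti, ki) :: l2) ->
    is_trail (l1 ++ (ti, ki) :: l2) ->
    approx (l1 ++ (ti, lam) :: (s, lam) :: (ti, ki) :: l2) (l1 ++ (ti, ki) :: l2)
| ap_b l tn lam s nu :
    lam <> nu ->
    is_trail (l ++ [(tn, lam); (s, nu)]) ->
    is_trail (l ++ [(tn, nu)]) ->
    approx (l ++ [(tn, lam); (s, nu)]) (l ++ [(tn, nu)])
| ap_c l tn lam kn :
    E lam kn tn ->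
    is_trail (l ++ [(tn, lam)]) ->
    is_trail (l ++ [(tn, kn)]) ->
    approx (l ++ [(tn, lam)]) (l ++ [(tn, kn)]).

Definition cls (p : rtrail) : rtrail -> Prop := fun q => approx p q.

Definition UB : Type := { c : rtrail -> Prop | exists p, is_trail p /\ c = cls p }.

Definition vec : Type := I3 -> UB.

Definition Rt (t : tri) : vec -> Prop :=
  fun v => exists p, is_trail p /\ ends_at p t /\
           forall k, proj1_sig (v k) = cls (setlast p k).

Definition VB : vec -> Prop := fun v => exists t, inB t /\ Rt t v.

Definition Cyl (k : I3) (X : vec -> Prop) : vec -> Prop :=
  fun v => exists u, X u /\ forall l, l <> k -> u l = v l.
Definition Diag (k l : I3) : vec -> Prop := fun v => v k = v l.

Definition cyl_closed (F : (vec -> Prop) -> Prop) : Prop :=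
  (forall G : (vec -> Prop) -> Prop, (forall Y, G Y -> F Y) ->
      F (fun v => exists Y, G Y /\ Y v)) /\
  (forall X, F X -> F (fun v => ~ X v)) /\
  (forall k X, F X -> F (Cyl k X)) /\
  (forall k l, F (Diag k l)).

Definition inC (X : vec -> Prop) : Prop :=
  forall F, cyl_closed F -> (forall t, inB t -> F (Rt t)) -> F X.

Definition inRc (X : vec -> Prop) : Prop := inC X /\ (forall v, X v -> VB v).
Definition Rc_union (X Y : vec -> Prop) : vec -> Prop := fun v => X v \/ Y v.
Definition Rc_inter (X Y : vec -> Prop) : vec -> Prop := fun v => X v /\ Y v.
Definition Rc_compl (X : vec -> Prop) : vec -> Prop := fun v => VB v /\ ~ X v.
Definition Rc_empty : vec -> Prop := fun _ => False.
Definition Rc_full : vec -> Prop := VB.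
Definition Rc_cyl (k : I3) (X : vec -> Prop) : vec -> Prop :=
  fun v => VB v /\ Cyl k X v.
Definition Rc_diag (k l : I3) : vec -> Prop := fun v => VB v /\ Diag k l v.

Definition Rmap (X : tri -> Prop) : vec -> Prop :=
  fun v => exists t, X t /\ Rt t v.

Definition Rmap_iso : Prop :=
  (forall X, subB X -> inRc (Rmap X)) /\
  (forall X Y, subB X -> subB Y -> Rmap X = Rmap Y -> X = Y) /\
  (forall Y, inRc Y -> exists X, subB X /\ Rmap X = Y) /\
  (forall X Y, subB X -> subB Y -> Rmap (Cm_union X Y) = Rc_union (Rmap X) (Rmap Y)) /\
  (forall X Y, subB X -> subB Y -> Rmap (Cm_inter X Y) = Rc_inter (Rmap X) (Rmap Y)) /\
  (forall X, subB X -> Rmap (Cm_compl X) = Rc_compl (Rmap X)) /\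
  Rmap Cm_empty = Rc_empty /\
  Rmap Cm_full = Rc_full /\
  (forall k X, subB X -> Rmap (Tstar k X) = Rc_cyl k (Rmap X)) /\
  (forall k l, Rmap (E k l) = Rc_diag k l).

End Suitable.

(* Main.v *)
Require Import Defs.
From Stdlib Require Import List ClassicalEpsilon Lia FunctionalExtensionality PropExtensionality ProofIrrelevance.
Import ListNotations.

Module P2.
Section Hunt.
Variable A : Type.
Variable p : A -> A -> A.
Variable n : A -> A.
Hypothesis hC : forall x y, p x y = p y x.
Hypothesis hA : forall x y z, p x (p y z) = p (p x y) z.
Hypothesis hH : forall x y, p (n (p (n x) (n y))) (n (p (n x) y)) = x.
Lemma h_one : forall x y, p x (n x) = p y (n y).
Proof. intros x y.
pose proof (hH x y).
pose proof (hH x (n y)).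
pose proof (hH (n x) (n y)).
pose proof (hH y (n x)).
pose proof (hH (n y) (n x)).
pose proof (hC (n x) x).
pose proof (hA (n (p (n (n x)) (n (n y)))) (n (p (n (n x)) (n y))) x).
pose proof (hC (n x) (n y)).
pose proof (hC (n x) (n (n y))).
pose proof (hC (n (p (n x) (n (n y)))) (n (p (n x) (n y)))).
pose proof (hC (n (n x)) (n y)).
pose proof (hC (n (n x)) (n (n y))).
pose proof (hC (n (p (n (n y)) (n (n x)))) (n (p (n (n y)) (n x)))).
pose proof (hA (n (p (n (n x)) (n y))) (n (p (n x) (n y))) (n (p (n x) y))).
pose proof (hA (n (p (n (n x)) (n y))) (n (p (n x) (n y))) (n (p (n x) (n (n y))))).
pose proof (hC (n (p (n (n x)) (n (n y)))) (p y (n (p (n x) y)))).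
pose proof (hA y (n (p (n x) (n (n y)))) (n (p (n (n x)) (n (n y))))).
congruence. Qed.
Lemma h_nn : forall x, n (n x) = x. Proof. intros x. pose proof h_one as one.
pose proof (hH (n (n x)) (n x)).
pose proof (one x (n x)).
pose proof (one x (n (n x))).
pose proof (hC (n x) (n (n (n x)))).
pose proof (hC (n (p (n x) (n (n (n x))))) (n (p (n x) (n (n x))))).
pose proof (hH x (n (n x))).
pose proof (hC (n (n x)) (n (n (n x)))).
congruence. Qed.
Lemma h_idem : forall x, p x x = x. Proof. intros x. pose proof h_nn as nn. pose proof h_one as one.
pose proof (hH x (p x x)).
pose proof (hH (p x x) x).
pose proof (one x x).
pose proof (one (p x x) x).
pose proof (nn x).
pose proof (hC (n x) x).
pose proof (hC (n x) (n (p x x))).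
pose proof (hC (n x) x).
pose proof (hC (n (p x x)) (p x x)).
pose proof (hH x (n x)).
pose proof (hH (n x) x).
pose proof (hH (n x) (n x)).
pose proof (one (n (p (n x) x)) x).
pose proof (nn (p (n x) x)).
pose proof (hA (n (p (n x) x)) (n (p x x)) (n x)).
pose proof (hA (n (p (n x) x)) (n (p x x)) (p x x)).
pose proof (hC (n (p (n x) (n (p x x)))) (n (p (n x) (p x x)))).
pose proof (hA (n (p x x)) (n (p (n x) x)) (n (p (n x) (n x)))).
pose proof (hH (p (n x) x) (p (n x) (n (p x x)))).
congruence. Qed.
Lemma h_zr : forall x y, p x (n (p y (n y))) = x.
Proof. intros x y. pose proof h_nn as nn. pose proof h_one as one. pose proof h_idem as idem.
pose proof (hC y (n y)).
pose proof (hH x x).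
pose proof (one (n y) x).
pose proof (nn x).
pose proof (nn y).
pose proof (one (p (n x) (n x)) x).
pose proof (idem (n x)).
congruence. Qed.
Lemma h_top : forall x y, p x (p y (n y)) = p y (n y).
Proof. intros x y. pose proof h_one as one. pose proof h_idem as idem.
pose proof (one y x). pose proof (idem x). pose proof (hA x x (n x)). congruence. Qed.
Lemma h_abs : forall x y, p x (n (p (n x) y)) = x.
Proof. intros x y. pose proof h_idem as idem.
pose proof (hH x y).
pose proof (idem (n (p (n x) y))).
pose proof (hA (n (p (n x) (n y))) (n (p (n x) y)) (n (p (n x) y))).
congruence. Qed.
End Hunt.

Section WAlg.
Variable W : WA.
Local Notation p := (plus W).
Local Notation n := (compl W).
Local Notation c := (comp W).
Local Notation v := (conv W).
Local Notation i1 := (id1 W).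
Local Notation le := (leq W).
Local Notation one := (one W).
Local Notation zero := (zero W).
Local Notation mt := (meet W).

Lemma ax_all :
    (forall x y, p x y = p y x) /\
    (forall x y z, p x (p y z) = p (p x y) z) /\
    (forall x y, p (n (p (n x) (n y))) (n (p (n x) y)) = x) /\
    (forall x, c (c (mt x i1) one) one = c (mt x i1) one) /\
    (forall x y z, c (p x y) z = p (c x z) (c y z)) /\
    (forall x, c x i1 = x) /\
    (forall x, v (v x) = x) /\
    (forall x y, v (p x y) = p (v x) (v y)) /\
    (forall x y, v (c x y) = c (v y) (v x)) /\
    (forall x y, p (c (v x) (n (c x y))) (n y) = n y).
Proof. exact (wa_axioms W). Qed.

Lemma pC x y : p x y = p y x. Proof. apply ax_all. Qed.
Lemma pA x y z : p x (p y z) = p (p x y) z. Proof. apply ax_all. Qed.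
Lemma hH x y : p (n (p (n x) (n y))) (n (p (n x) y)) = x. Proof. apply ax_all. Qed.
Lemma waA x : c (c (mt x i1) one) one = c (mt x i1) one. Proof. apply ax_all. Qed.
Lemma ldist x y z : c (p x y) z = p (c x z) (c y z). Proof. apply ax_all. Qed.
Lemma rid x : c x i1 = x. Proof. apply ax_all. Qed.
Lemma vv x : v (v x) = x. Proof. apply ax_all. Qed.
Lemma vp x y : v (p x y) = p (v x) (v y). Proof. apply ax_all. Qed.
Lemma vc x y : v (c x y) = c (v y) (v x). Proof. apply ax_all. Qed.
Lemma hS x y : p (c (v x) (n (c x y))) (n y) = n y. Proof. apply ax_all. Qed.

Lemma one_eq x : p x (n x) = one.
Proof. unfold Defs.one. apply (h_one _ _ _ pC pA hH). Qed.
Lemma nn x : n (n x) = x. Proof. apply (h_nn _ _ _ pC pA hH). Qed.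
Lemma idem x : p x x = x. Proof. apply (h_idem _ _ _ pC pA hH). Qed.
Lemma zr x : p x zero = x. Proof. unfold Defs.zero, Defs.one. apply (h_zr _ _ _ pC pA hH). Qed.
Lemma zl x : p zero x = x. Proof. rewrite pC; apply zr. Qed.
Lemma top x : p x one = one. Proof. unfold Defs.one. apply (h_top _ _ _ pC pA hH). Qed.
Lemma abs x y : p x (n (p (n x) y)) = x. Proof. apply (h_abs _ _ _ pC pA hH). Qed.
Lemma n_zero : n zero = one. Proof. unfold Defs.zero; apply nn. Qed.
Lemma n_one : n one = zero. Proof. reflexivity. Qed.

Lemma le_refl x : le x x. Proof. apply idem. Qed.
Lemma le_trans x y z : le x y -> le y z -> le x z.
Proof. unfold leq; intros H1 H2. rewrite <- H2, pA, H1. reflexivity. Qed.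
Lemma le_antisym x y : le x y -> le y x -> x = y.
Proof. unfold leq; intros H1 H2. rewrite <- H1. rewrite pC. symmetry. exact H2. Qed.
Lemma le_top x : le x one. Proof. apply top. Qed.
Lemma le_zero x : le zero x. Proof. apply zl. Qed.
Lemma le_pl x y : le x (p x y). Proof. unfold leq. rewrite pA, idem. reflexivity. Qed.
Lemma le_pr x y : le y (p x y). Proof. rewrite pC. apply le_pl. Qed.
Lemma le_lub a b z : le a z -> le b z -> le (p a b) z.
Proof. unfold leq; intros H1 H2. rewrite <- pA, H2, H1. reflexivity. Qed.
Lemma mt_C x y : mt x y = mt y x. Proof. unfold Defs.meet. rewrite pC. reflexivity. Qed.
Lemma mt_le_l x y : le (mt x y) x.
Proof. unfold leq, Defs.meet. rewrite pC. apply abs. Qed.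
Lemma mt_le_r x y : le (mt x y) y.
Proof. rewrite mt_C. apply mt_le_l. Qed.
Lemma compl_anti a b : le a b -> le (n b) (n a).
Proof. unfold leq; intros H. rewrite <- H.
  replace (n (p a b)) with (mt (n a) (n b)) by (unfold Defs.meet; rewrite !nn; reflexivity).
  pose proof (mt_le_l (n a) (n b)) as H0. exact H0. Qed.
Lemma le_compl_swap a b : le a (n b) -> le b (n a).
Proof. intros H. apply compl_anti in H. rewrite nn in H. exact H. Qed.
Lemma le_self_compl x : le x (n x) -> x = zero.
Proof. unfold leq. intros H. rewrite one_eq in H. rewrite <- (nn x), <- H. reflexivity. Qed.
Lemma le_and_compl a b : le a b -> le a (n b) -> a = zero.
Proof. intros H1 H2. apply le_self_compl. apply le_compl_swap in H2.
  eapply le_trans; eauto. Qed.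
Lemma split_ a z : a = p (mt a z) (mt a (n z)).
Proof. unfold Defs.meet. rewrite nn. symmetry. apply hH. Qed.
Lemma meet_of_le a b : le a b -> mt a b = a.
Proof. intros H. apply compl_anti in H. unfold leq in H. unfold Defs.meet.
  rewrite pC, H, nn. reflexivity. Qed.
Lemma le_zero_eq x : le x zero -> x = zero.
Proof. intros H. apply le_antisym; auto. apply le_zero. Qed.
Lemma atoms_le a b : atom W a -> atom W b -> le a b -> a = b.
Proof. intros [Ha _] [_ Hb] H. destruct (Hb a H); [contradiction|auto]. Qed.
Lemma atom_dich a z : atom W a -> le a z \/ le a (n z).
Proof. intros [Hnz Hat]. destruct (Hat (mt a z) (mt_le_l a z)) as [E|E].
  - right. rewrite (split_ a z), E, zl. apply mt_le_r.
  - left. rewrite <- E. apply mt_le_r. Qed.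
Lemma compl_le_split w x : mt w x = zero -> le x (n w).
Proof. intros E. rewrite (split_ x w), mt_C, E, zl. apply mt_le_r. Qed.
Lemma sum_one_le a b : p a b = one -> le (n a) b.
Proof. intros E. rewrite (split_ (n a) b).
  replace (mt (n a) (n b)) with zero.
  - rewrite zr. apply mt_le_r.
  - unfold Defs.meet. rewrite !nn, E. reflexivity. Qed.

Lemma vi : v i1 = i1.
Proof. pose proof (rid (v i1)) as H. apply (f_equal v) in H. rewrite vc, vv, rid in H.
  exact H. Qed.
Lemma lid x : c i1 x = x.
Proof. rewrite <- (vv (c i1 x)), vc, vi, rid, vv. reflexivity. Qed.
Lemma rdist x y z : c x (p y z) = p (c x y) (c x z).
Proof. rewrite <- (vv (c x (p y z))), vc, vp, ldist, vp, !vc, !vv. reflexivity. Qed.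
Lemma cmono_l a b z : le a b -> le (c a z) (c b z).
Proof. unfold leq; intros H. rewrite <- ldist, H. reflexivity. Qed.
Lemma cmono_r a b z : le a b -> le (c z a) (c z b).
Proof. unfold leq; intros H. rewrite <- rdist, H. reflexivity. Qed.
Lemma vmono a b : le a b -> le (v a) (v b).
Proof. unfold leq; intros H. rewrite <- vp, H. reflexivity. Qed.
Lemma v_zero : v zero = zero.
Proof. apply le_zero_eq. pose proof (vmono _ _ (le_zero (v zero))) as H. rewrite vv in H. exact H. Qed.
Lemma v_one : v one = one.
Proof. apply le_antisym. apply le_top. pose proof (vmono _ _ (le_top (v one))) as H.
  rewrite vv in H. exact H. Qed.
Lemma atom_v a : atom W a -> atom W (v a).
Proof. intros [Hnz Hat]. split.
  - intros E. apply Hnz. rewrite <- (vv a), E, v_zero. reflexivity.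
  - intros y Hy. apply vmono in Hy. rewrite vv in Hy. destruct (Hat _ Hy) as [E|E].
    + left. rewrite <- (vv y), E, v_zero. reflexivity.
    + right. rewrite <- (vv y), E. reflexivity. Qed.
Lemma v_n x : v (n x) = n (v x).
Proof. apply le_antisym.
  - set (w := mt (v (n x)) (v x)).
    assert (Hw : w = zero).
    { assert (H1 := vmono _ _ (mt_le_l (v (n x)) (v x))).
      assert (H2 := vmono _ _ (mt_le_r (v (n x)) (v x))). rewrite vv in H1, H2.
      fold w in H1, H2. rewrite <- (vv w), (le_and_compl _ _ H2 H1), v_zero. reflexivity. }
    rewrite (split_ (v (n x)) (v x)). fold w. rewrite Hw, zl. apply mt_le_r.
  - apply sum_one_le. rewrite <- vp, one_eq, v_one. reflexivity. Qed.
Lemma schr1 x y z : le z (n (c x y)) -> le (c (v x) z) (n y).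
Proof. intros H. eapply le_trans. apply cmono_r; exact H. apply hS. Qed.
Lemma schr2 x y z : le z (n (c x y)) -> le (c z (v y)) (n x).
Proof. intros H. apply vmono in H. rewrite v_n, vc in H.
  apply schr1 in H. rewrite vv in H. apply vmono in H. rewrite vc, vv, v_n, vv in H. exact H. Qed.
Lemma c_le_l_id e x : le e i1 -> le (c x e) x.
Proof. intros H. rewrite <- (rid x) at 2. apply cmono_r; auto. Qed.
Lemma c_le_r_id e x : le e i1 -> le (c e x) x.
Proof. intros H. rewrite <- (lid x) at 2. apply cmono_l; auto. Qed.
Lemma le_c_one x : le x (c x one).
Proof. rewrite <- (rid x) at 1. apply cmono_r, le_top. Qed.

Definition idatom (e : W) : Prop := atom W e /\ le e i1.

Lemma idc_zero e e' : idatom e -> idatom e' -> e <> e' -> c e' e = zero.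
Proof. intros [He Hei] [He' Hei'] Hne.
  assert (H1 : le (c e' e) e') by (apply c_le_l_id; auto).
  assert (H2 : le (c e' e) e) by (apply c_le_r_id; auto).
  destruct He as [Hnz Hat]. destruct (Hat _ H2) as [E|E]; auto.
  exfalso. apply Hne. rewrite E in H1. apply atoms_le; auto. split; auto. Qed.
Lemma v_id e : idatom e -> v e = e.
Proof. intros He. destruct (classic (v e = e)) as [E|Hne]; auto. exfalso.
  assert (Hve : idatom (v e)).
  { destruct He as [Ha Hle]. split. apply atom_v; auto. rewrite <- vi. apply vmono; auto. }
  pose proof (idc_zero _ _ Hve He Hne) as Z.
  assert (H : le (c (v e) one) (n (v e))).
  { apply schr1. rewrite Z, n_zero. apply le_refl. }
  assert (H' : le (v e) (n (v e))) by (eapply le_trans; [apply le_c_one|exact H]).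
  apply le_self_compl in H'. destruct Hve as [[Hnz _] _]. auto. Qed.
Lemma cycA a b c0 : atom W a -> atom W b -> atom W c0 -> le c0 (c a b) -> le b (c (v a) c0).
Proof. intros Ha Hb Hc H. destruct (atom_dich b (c (v a) c0) Hb) as [H1|H1]; auto. exfalso.
  apply cmono_r with (z := a) in H1. pose proof (hS (v a) c0) as H2. rewrite vv in H2.
  assert (H3 : le c0 (n c0)) by (eapply le_trans; [exact H|]; eapply le_trans; [exact H1| exact H2]).
  apply le_self_compl in H3. destruct Hc; auto. Qed.
Lemma cycB a b c0 : atom W a -> atom W b -> atom W c0 -> le c0 (c a b) -> le a (c c0 (v b)).
Proof. intros Ha Hb Hc H. apply vmono in H. rewrite vc in H.
  apply cycA in H; try apply atom_v; auto. rewrite vv in H. apply vmono in H. rewrite vc, !vv in H. exact H. Qed.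
Lemma waI e : le e i1 -> c (c e one) one = c e one.
Proof. intros H. rewrite <- (meet_of_le _ _ H). apply waA. Qed.
Lemma c_one_closed x y e : le e i1 -> le x (c e one) -> le (c x y) (c e one).
Proof. intros He H. eapply le_trans. apply cmono_l; exact H. rewrite <- (waI e He) at 2.
  apply cmono_r, le_top. Qed.
Lemma domU e e' a : idatom e -> idatom e' -> atom W a -> le a (c e one) -> le a (c e' one) -> e = e'.
Proof. intros He He' Ha H1 H2. destruct (classic (e = e')) as [E|Hne]; auto. exfalso.
  pose proof (idc_zero _ _ He He' Hne) as Z.
  assert (H3 : le (c e' one) (n e)).
  { rewrite <- (v_id e' He'). apply schr1. rewrite Z, n_zero. apply le_refl. }
  apply le_compl_swap in H3. rewrite <- (waI e') in H3 by (apply He').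
  apply schr2 in H3. rewrite v_one in H3.
  assert (a = zero). { apply (le_and_compl a (c e' one)); auto. eapply le_trans; [exact H1|exact H3]. }
  destruct Ha; auto. Qed.
Lemma domEx a : atomic W -> atom W a -> exists e, idatom e /\ le a (c e one).
Proof. intros Hat Ha. set (z := mt (c a (v a)) i1).
  destruct (classic (z = zero)) as [Z|Hz].
  - exfalso. apply compl_le_split in Z. apply schr2 in Z. rewrite lid, vv in Z.
    apply le_self_compl in Z. destruct Ha; auto.
  - destruct (Hat z Hz) as [e [He Hle]]. exists e.
    assert (H1 : le e (c a (v a))) by (eapply le_trans; [exact Hle|apply mt_le_l]).
    assert (H2 : le e i1) by (eapply le_trans; [exact Hle|apply mt_le_r]).
    split. split; auto.
    apply cycB in H1; auto; try apply atom_v; auto. rewrite vv in H1.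
    eapply le_trans; [exact H1|]. apply cmono_r, le_top. Qed.

Definition I3_eq_dec (a b : I3) : {a = b} + {a <> b}.
Proof. decide equality. Defined.

Definition edge (t : tri W) (a b : I3) : W :=
  match a, b with
  | I0, I1 => t I2 | I1, I0 => v (t I2)
  | I1, I2 => t I0 | I2, I1 => v (t I0)
  | I0, I2 => t I1 | I2, I0 => v (t I1)
  | _, _ => i1 end.

Ltac d3 := repeat match goal with
  | a : I3 |- _ => destruct a end; try congruence.

Lemma edge_atom t a b : inB W t -> a <> b -> atom W (edge t a b).
Proof. intros [Ha _] Hab. d3; simpl; auto; apply atom_v; auto. Qed.
Lemma edge_conv t a b : a <> b -> edge t b a = v (edge t a b).
Proof. intros. d3; simpl; rewrite ?vv; auto. Qed.
Lemma tri_le t a b d : inB W t -> a <> b -> b <> d -> a <> d ->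
  le (edge t a d) (c (edge t a b) (edge t b d)).
Proof. intros Ht Hab Hbd Had. destruct Ht as [Hat Hle].
  assert (A0 := Hat I0). assert (A1 := Hat I1). assert (A2 := Hat I2).
  assert (C1 := cycA _ _ _ A2 A0 A1 Hle).
  assert (C2 := cycB _ _ _ A2 A0 A1 Hle).
  assert (V0 := vmono _ _ Hle). rewrite vc in V0.
  assert (V1 := vmono _ _ C1). rewrite vc, vv in V1.
  assert (V2 := vmono _ _ C2). rewrite vc, vv in V2.
  d3; simpl; auto. Qed.
Lemma E_edge t a b : E W a b t -> a <> b -> le (edge t a b) i1.
Proof. intros [_ H] Hab. specialize (H Hab). d3; simpl in *; auto; rewrite <- vi; apply vmono; auto. Qed.
Lemma edge_E t a b : inB W t -> a <> b -> le (edge t a b) i1 -> E W a b t.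
Proof. intros Ht Hab H. split; auto. intros _. d3; simpl in *; auto;
  apply vmono in H; rewrite vv, vi in H; auto. Qed.
Lemma E_sym t a b : E W a b t -> E W b a t.
Proof. intros [Ht H]. split; auto. intros Hba. d3; simpl in *; auto. Qed.
Lemma E_refl t a : inB W t -> E W a a t.
Proof. intros Ht. split; auto. congruence. Qed.
Lemma T_edge l t s a b : T W l t s -> a <> l -> b <> l -> a <> b -> edge t a b = edge s a b.
Proof. intros [_ [_ H]] Ha Hb Hab. d3; simpl; rewrite H; auto. Qed.
Lemma ML s a b d : inB W s -> E W a b s -> a <> b -> d <> a -> d <> b ->
  edge s a d = edge s b d.
Proof. intros Hs HE Hab Hda Hdb.
  apply atoms_le; try apply edge_atom; auto.
  eapply le_trans. apply (tri_le s a b d); auto.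
  apply c_le_r_id. apply E_edge; auto. Qed.
Lemma ML' s a b d : inB W s -> E W a b s -> a <> b -> d <> a -> d <> b ->
  edge s d a = edge s d b.
Proof. intros. rewrite (edge_conv s a d), (edge_conv s b d) by auto. f_equal. apply ML; auto. Qed.
Lemma E_idatom s a b : inB W s -> E W a b s -> a <> b -> idatom (edge s a b).
Proof. intros. split. apply edge_atom; auto. apply E_edge; auto. Qed.
Lemma selfconv s a b : inB W s -> E W a b s -> a <> b -> edge s b a = edge s a b.
Proof. intros. rewrite edge_conv by auto. apply v_id, E_idatom; auto. Qed.
Lemma TransE s a b d : inB W s -> E W a b s -> E W b d s -> a <> d -> E W a d s.
Proof. intros Hs H1 H2 Had.
  destruct (I3_eq_dec a b) as [->|Hab]; auto.
  destruct (I3_eq_dec b d) as [->|Hbd]; auto.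
  apply edge_E; auto. eapply le_trans. apply (tri_le s a b d); auto.
  eapply le_trans. apply cmono_l, E_edge; eauto. rewrite lid. apply E_edge; auto. Qed.
End WAlg.

End P2.
Import P2.
Module P3.

Section Names.
Variable W : WA.
Hypothesis Hat : atomic W.
Local Notation p := (plus W).
Local Notation n := (compl W).
Local Notation c := (comp W).
Local Notation v := (conv W).
Local Notation i1 := (id1 W).
Local Notation le := (leq W).
Local Notation one := (one W).
Local Notation zero := (zero W).
Local Notation emi := excluded_middle_informative.
Local Notation edge := (edge W).
Local Notation idatom := (idatom W).

Ltac d3 := repeat match goal with
  | a : I3 |- _ => destruct a end; try congruence.

Definition o1 (l : I3) := match l with I0 => I1 | I1 => I0 | I2 => I0 end.
Definition o2 (l : I3) := match l with I0 => I2 | I1 => I2 | I2 => I1 end.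
Lemma o_cases l j : j <> l -> j = o1 l \/ j = o2 l.
Proof. intros; d3; simpl; auto. Qed.
Lemma o1_ne l : o1 l <> l. Proof. d3; simpl; congruence. Qed.
Lemma o2_ne l : o2 l <> l. Proof. d3; simpl; congruence. Qed.
Lemma o12_ne l : o1 l <> o2 l. Proof. d3; simpl; congruence. Qed.

Inductive name := NInit (t0 : tri W) (j : I3) | NBirth (s : tri W) (b : list (tri W * I3)).

Definition rep (s : tri W) (a : I3) : I3 :=
  if emi (E W I0 a s) then I0 else if emi (E W I1 a s) then I1 else I2.

Fixpoint names (st : list (tri W * I3)) (a : I3) {struct st} : name :=
  match st with
  | [] => NInit (fun _ => i1) a
  | (s, _) :: b =>
    match b with
    | [] => NInit s (rep s a)
    | (t, l) :: _ =>
      if I3_eq_dec a l then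
        (if emi (E W l (o1 l) s) then names b (o1 l)
         else if emi (E W l (o2 l) s) then names b (o2 l)
         else NBirth s b)
      else names b a
    end
  end.

Fixpoint vstack (st : list (tri W * I3)) : Prop :=
  match st with
  | [] => False
  | (s, _) :: b => match b with
                   | [] => inB W s
                   | (t, l) :: _ => inB W s /\ T W l t s /\ vstack b
                   end
  end.

Definition top (st : list (tri W * I3)) : tri W :=
  match st with (s, _) :: _ => s | [] => fun _ => i1 end.

Definition age (X : name) : nat := match X with NInit _ _ => 0 | NBirth _ b => length b end.

Lemma names_idx s k k' b a : names ((s,k)::b) a = names ((s,k')::b) a.
Proof. destruct b; reflexivity. Qed.

Lemma age_lt st a : st <> [] -> age (names st a) < length st.
Proof. revert a. induction st as [|[s k] b IH]; intros a Hne; [congruence|].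
  destruct b as [|[t l] r]; simpl; [lia|].
  destruct (I3_eq_dec a l).
  - destruct (emi _). specialize (IH (o1 l) ltac:(discriminate)). simpl in *. lia.
    destruct (emi _). specialize (IH (o2 l) ltac:(discriminate)). simpl in *. lia.
    simpl. lia.
  - specialize (IH a ltac:(discriminate)). simpl in *. lia. Qed.

Lemma vstack_inB st : vstack st -> inB W (top st).
Proof. destruct st as [|[s k] [|[t l] r]]; simpl; tauto. Qed.
Lemma vstack_tail s k b : vstack ((s,k)::b) -> b <> [] -> vstack b.
Proof. destruct b as [|[t l] r]; simpl; tauto. Qed.

Lemma Etrans s a b d : inB W s -> E W a b s -> E W b d s -> E W a d s.
Proof. intros Hs H1 H2. destruct (I3_eq_dec a d) as [->|Hne]. apply E_refl; auto.
  apply (TransE W s a b d); auto. Qed.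

Lemma rep_E s a : inB W s -> E W a (rep s a) s.
Proof. intros Hs. unfold rep. destruct (emi _) as [H|H]. apply E_sym; auto.
  destruct (emi _) as [H'|H']. apply E_sym; auto.
  destruct a. exfalso; apply H, E_refl; auto. exfalso; apply H', E_refl; auto. apply E_refl; auto. Qed.
Lemma rep_eq s a d : inB W s -> E W a d s -> rep s a = rep s d.
Proof. intros Hs H. unfold rep.
  destruct (emi (E W I0 a s)) as [H1|H1]; destruct (emi (E W I0 d s)) as [H2|H2]; auto.
  - exfalso. apply H2. eapply Etrans; eauto.
  - exfalso. apply H1. eapply Etrans; eauto. apply E_sym; auto.
  - destruct (emi (E W I1 a s)) as [H3|H3]; destruct (emi (E W I1 d s)) as [H4|H4]; auto.
    + exfalso. apply H4. eapply Etrans; eauto.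
    + exfalso. apply H3. eapply Etrans; eauto. apply E_sym; auto. Qed.

Lemma E_T l t s a d : T W l t s -> a <> l -> d <> l -> (E W a d t <-> E W a d s).
Proof. intros HT Ha Hd. destruct HT as [Ht [Hs Heq]].
  destruct (I3_eq_dec a d) as [->|Had]. split; intros; apply E_refl; auto.
  assert (He : edge t a d = edge s a d) by (apply (T_edge W l); auto; split; auto).
  split; intros H.
  - apply edge_E; auto. rewrite <- He. apply E_edge; auto.
  - apply edge_E; auto. rewrite He. apply E_edge; auto.
Qed.

Lemma names_step s k t l r a : names ((s,k)::(t,l)::r) a =
  (if I3_eq_dec a l then
     (if emi (E W l (o1 l) s) then names ((t,l)::r) (o1 l)
      else if emi (E W l (o2 l) s) then names ((t,l)::r) (o2 l)
      else NBirth s ((t,l)::r))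
   else names ((t,l)::r) a).
Proof. reflexivity. Qed.

Lemma birth_fresh s b d : b <> [] -> NBirth s b <> names b d.
Proof. intros Hb E0. pose proof (age_lt b d Hb) as H. rewrite <- E0 in H. simpl in H. lia. Qed.

Lemma IE_EN st : vstack st -> forall a d, names st a = names st d <-> E W a d (top st).
Proof.
  induction st as [|[s k] b IH]; intros Hv a d; [destruct Hv|].
  destruct b as [|[t l] r].
  - simpl in *. split; intro H.
    + injection H as H. eapply Etrans; [auto|apply rep_E; auto|]. rewrite H. apply E_sym, rep_E; auto.
    + f_equal. apply rep_eq; auto.
  - destruct Hv as [Hs [HT Hb]]. specialize (IH Hb). simpl top in *.
    assert (key : forall d, d <> l -> (names ((s,k)::(t,l)::r) l = names ((s,k)::(t,l)::r) d <-> E W l d s)).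
    { intros d0 Hd. rewrite !names_step. destruct (I3_eq_dec l l) as [_|]; [|congruence].
      destruct (I3_eq_dec d0 l) as [|_]; [congruence|].
      destruct (emi (E W l (o1 l) s)) as [H1|H1].
      - rewrite IH. rewrite (E_T l t s) by (auto using o1_ne). split; intro H.
        + eapply Etrans; eauto.
        + eapply Etrans; eauto. apply E_sym; auto.
      - destruct (emi (E W l (o2 l) s)) as [H2|H2].
        + rewrite IH. rewrite (E_T l t s) by (auto using o2_ne). split; intro H.
          * eapply Etrans; eauto.
          * eapply Etrans; eauto. apply E_sym; auto.
        + split; intro H.
          * exfalso. exact (birth_fresh s ((t,l)::r) d0 ltac:(discriminate) H).
          * exfalso. destruct (o_cases l d0 Hd) as [->| ->]; auto. }
    destruct (I3_eq_dec a l) as [->|Ha]; destruct (I3_eq_dec d l) as [->|Hd].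
    + split; intros; [apply E_refl; auto|reflexivity].
    + apply key; auto.
    + split; intro H. apply E_sym, key; auto. apply E_sym in H. symmetry. apply key; auto.
    + rewrite !names_step. destruct (I3_eq_dec a l); [congruence|]. destruct (I3_eq_dec d l); [congruence|].
      rewrite IH. apply (E_T l t s); auto.
Qed.

Definition pickpos (b : list (tri W * I3)) (X : name) (l : I3) : option I3 :=
  if emi (names b (o1 l) = X) then Some (o1 l)
  else if emi (names b (o2 l) = X) then Some (o2 l) else None.

Definition lab2 (X Y : name) : W :=
  match X with
  | NBirth s ((t, l) :: r) =>
      match pickpos ((t,l)::r) Y l with Some m => edge s l m | None => i1 end
  | NInit t0 j => match Y with NInit _ j' => edge t0 j j' | _ => i1 end
  | _ => i1 end.
Definition lab (X Y : name) : W :=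
  match Y with
  | NBirth s ((t, l) :: r) =>
      match pickpos ((t,l)::r) X l with Some m => edge s m l | None => lab2 X Y end
  | _ => lab2 X Y end.

Lemma pick_spec b X l m : pickpos b X l = Some m -> names b m = X /\ m <> l.
Proof. unfold pickpos. destruct (emi _) as [H|H]. intros [= <-]. split; auto using o1_ne.
  destruct (emi _) as [H'|H']. intros [= <-]. split; auto using o2_ne. discriminate. Qed.
Lemma pick_some b X l j : names b j = X -> j <> l -> exists m, pickpos b X l = Some m.
Proof. intros H Hj. unfold pickpos. destruct (emi _). eauto. destruct (emi _). eauto.
  exfalso. destruct (o_cases l j Hj) as [->| ->]; auto. Qed.

Lemma lab_birth_l s b X : age X < length b -> lab X (NBirth s b) = lab X (NBirth s b) /\
   lab (NBirth s b) X = lab2 (NBirth s b) X.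
Proof. intros Hage. split; auto. unfold lab. destruct X as [t0 j|s' b']; [reflexivity|].
  destruct b' as [|[t' l'] r']; [reflexivity|].
  destruct (pickpos ((t',l')::r') (NBirth s b) l') as [m|] eqn:Hp; [|reflexivity].
  exfalso. apply pick_spec in Hp. destruct Hp as [Hp _].
  pose proof (age_lt ((t',l')::r') m ltac:(discriminate)) as H. rewrite Hp in H. simpl in *. lia. Qed.

Lemma edge_E1 s a a' d : inB W s -> E W a a' s -> a <> d -> a' <> d -> edge s a d = edge s a' d.
Proof. intros Hs H Had Ha'd. destruct (I3_eq_dec a a') as [->|Hne]; auto. apply ML; auto. Qed.
Lemma edge_E1' s a a' d : inB W s -> E W a a' s -> a <> d -> a' <> d -> edge s d a = edge s d a'.
Proof. intros Hs H Had Ha'd. destruct (I3_eq_dec a a') as [->|Hne]; auto. apply ML'; auto. Qed.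
Lemma edge_E2 s a a' d d' : inB W s -> E W a a' s -> E W d d' s -> a <> d -> a' <> d' ->
  edge s a d = edge s a' d'.
Proof. intros Hs H1 H2 Had Had'.
  destruct (I3_eq_dec d a') as [->|Hne].
  -
    destruct (I3_eq_dec d' a) as [->|Hne2].
    + rewrite (selfconv W s a a'); auto.
    + rewrite (edge_E1' s a' d' a) by auto. apply edge_E1; auto.
  - rewrite (edge_E1 s a a' d) by auto. apply edge_E1'; auto. Qed.

Lemma INV st : vstack st -> forall a d, a <> d -> names st a <> names st d ->
  edge (top st) a d = lab (names st a) (names st d).
Proof.
  induction st as [|[s k] b IH]; intros Hv a d Had Hn; [destruct Hv|].
  destruct b as [|[t l] r].
  - simpl in *. unfold lab, lab2. apply edge_E2; auto using rep_E.
    intro E0. apply Hn. rewrite E0. reflexivity.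
  - destruct Hv as [Hs [HT Hb]]. specialize (IH Hb). simpl top.
    assert (Ht : inB W t) by (destruct HT; tauto).
    assert (IEb := IE_EN ((t,l)::r) Hb).
    destruct (I3_eq_dec a l) as [->|Ha]; destruct (I3_eq_dec d l) as [->|Hd]; try congruence.
    +
      revert Hn. rewrite !names_step. destruct (I3_eq_dec l l) as [_|]; [|congruence].
      destruct (I3_eq_dec d l) as [|_]; [congruence|].
      destruct (emi (E W l (o1 l) s)) as [H1|H1]; [|destruct (emi (E W l (o2 l) s)) as [H2|H2]].
      * intros Hn. assert (Hd1 : o1 l <> d) by (intro; subst; auto).
        rewrite <- IH by auto. rewrite (ML W s l (o1 l) d) by (auto using o1_ne).
        simpl top; symmetry; apply (T_edge W l t s); auto using o1_ne.
      * intros Hn. assert (Hd1 : o2 l <> d) by (intro; subst; auto).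
        rewrite <- IH by auto. rewrite (ML W s l (o2 l) d) by (auto using o2_ne).
        simpl top; symmetry; apply (T_edge W l t s); auto using o2_ne.
      * intros _. destruct (lab_birth_l s ((t,l)::r) (names ((t,l)::r) d)) as [_ ->].
        { apply age_lt. discriminate. }
        unfold lab2. destruct (pick_some ((t,l)::r) (names ((t,l)::r) d) l d eq_refl Hd) as [m Hm].
        rewrite Hm. apply pick_spec in Hm. destruct Hm as [Hm Hml].
        destruct (I3_eq_dec m d) as [->|Hmd]; auto.
        apply ML'; auto. apply (E_T l t s); auto. apply IEb. auto.
    +
      revert Hn. rewrite !names_step. destruct (I3_eq_dec l l) as [_|]; [|congruence].
      destruct (I3_eq_dec a l) as [|_]; [congruence|].
      destruct (emi (E W l (o1 l) s)) as [H1|H1]; [|destruct (emi (E W l (o2 l) s)) as [H2|H2]].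
      * intros Hn. assert (Hd1 : a <> o1 l) by (intro; subst; auto).
        rewrite <- IH by auto. rewrite (ML' W s l (o1 l) a) by (auto using o1_ne).
        simpl top; symmetry; apply (T_edge W l t s); auto using o1_ne.
      * intros Hn. assert (Hd1 : a <> o2 l) by (intro; subst; auto).
        rewrite <- IH by auto. rewrite (ML' W s l (o2 l) a) by (auto using o2_ne).
        simpl top; symmetry; apply (T_edge W l t s); auto using o2_ne.
      * intros _. unfold lab. destruct (pick_some ((t,l)::r) (names ((t,l)::r) a) l a eq_refl Ha) as [m Hm].
        rewrite Hm. apply pick_spec in Hm. destruct Hm as [Hm Hml].
        destruct (I3_eq_dec m a) as [->|Hma]; auto.
        symmetry. apply ML; auto. apply (E_T l t s); auto. apply IEb. auto.
    + revert Hn. rewrite !names_step. destruct (I3_eq_dec a l); [congruence|].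
      destruct (I3_eq_dec d l); [congruence|]. intros Hn.
      rewrite <- IH by auto. symmetry. apply (T_edge W l); auto.
Qed.

Definition dtri (X : name) : tri W := match X with NInit t _ => t | NBirth s _ => s end.
Definition dpos (X : name) : I3 :=
  match X with NInit _ j => j | NBirth _ ((_, l) :: _) => l | NBirth _ [] => I0 end.
Definition domP (X : name) (e : W) : Prop :=
  idatom e /\ forall j, j <> dpos X -> le (edge (dtri X) (dpos X) j) (c e one).
Definition dom (X : name) : W := epsilon (inhabits i1) (domP X).

Lemma spread_all s m e : inB W s -> le e i1 -> (exists j0, j0 <> m /\ le (edge s m j0) (c e one)) ->
  forall j, j <> m -> le (edge s m j) (c e one).
Proof. intros Hs He [j0 [Hj0 H]] j Hj. destruct (I3_eq_dec j j0) as [->|Hne]; auto.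
  eapply le_trans. apply (tri_le W s m j0 j); auto. apply c_one_closed; auto. Qed.
Lemma spread_E s m a e : inB W s -> E W m a s -> le e i1 ->
  (forall j, j <> m -> le (edge s m j) (c e one)) -> forall j, j <> a -> le (edge s a j) (c e one).
Proof. intros Hs HE He H. destruct (I3_eq_dec a m) as [->|Ham]; auto.
  apply spread_all; auto. exists m. split; auto. rewrite (selfconv W s m a); auto. Qed.
Lemma third_ex (a l : I3) : a <> l -> exists nu : I3, nu <> a /\ nu <> l.
Proof. intros; d3; first [exists I0; split; congruence | exists I1; split; congruence | exists I2; split; congruence]. Qed.
Lemma dom_ex s m : inB W s -> exists e, idatom e /\ forall j, j <> m -> le (edge s m j) (c e one).
Proof. intros Hs. destruct (domEx W (edge s m (o1 m)) Hat) as [e [He H]].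
  apply edge_atom; auto using o1_ne. exists e. split; auto.
  apply spread_all; auto. apply He. exists (o1 m). split; auto using o1_ne. Qed.
Lemma dom_spec X : (exists e, domP X e) -> domP X (dom X).
Proof. intros H. unfold dom. apply epsilon_spec. exact H. Qed.

Lemma DOM st : vstack st -> forall a, idatom (dom (names st a)) /\
  forall j, j <> a -> le (edge (top st) a j) (c (dom (names st a)) one).
Proof.
  induction st as [|[s k] b IH]; intros Hv a; [destruct Hv|].
  destruct b as [|[t l] r].
  - simpl in *. destruct (dom_spec (NInit s (rep s a))) as [Hi Hd].
    { destruct (dom_ex s (rep s a) Hv) as [e He]. exists e. exact He. }
    split; auto. simpl in Hd. apply (spread_E s (rep s a)); auto. apply E_sym, rep_E; auto. apply Hi.
  - destruct Hv as [Hs [HT Hb]]. specialize (IH Hb). simpl top in *.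
    assert (Ht : inB W t) by (destruct HT; tauto).
    assert (claim : forall a, a <> l -> idatom (dom (names ((s,k)::(t,l)::r) a)) /\
        forall j, j <> a -> le (edge s a j) (c (dom (names ((s,k)::(t,l)::r) a)) one)).
    { intros a0 Ha0. rewrite names_step. destruct (I3_eq_dec a0 l); [congruence|].
      destruct (IH a0) as [Hi Hd]. split; auto. apply spread_all; auto. apply Hi.
      destruct (third_ex a0 l Ha0) as [nu [H1 H2]]. exists nu. split; auto.
      rewrite <- (T_edge W l t s) by auto. apply Hd; auto. }
    destruct (I3_eq_dec a l) as [->|Ha]; [|apply claim; auto].
    rewrite names_step. destruct (I3_eq_dec l l) as [_|]; [|congruence].
    destruct (emi (E W l (o1 l) s)) as [H1|H1]; [|destruct (emi (E W l (o2 l) s)) as [H2|H2]].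
    + destruct (claim (o1 l) (o1_ne l)) as [Hi Hd]. rewrite names_step in Hi, Hd.
      destruct (I3_eq_dec (o1 l) l) as [E0|_]; [exfalso; apply (o1_ne l); auto|].
      split; auto. apply (spread_E s (o1 l)); auto. apply E_sym; auto. apply Hi.
    + destruct (claim (o2 l) (o2_ne l)) as [Hi Hd]. rewrite names_step in Hi, Hd.
      destruct (I3_eq_dec (o2 l) l) as [E0|_]; [exfalso; apply (o2_ne l); auto|].
      split; auto. apply (spread_E s (o2 l)); auto. apply E_sym; auto. apply Hi.
    + destruct (dom_spec (NBirth s ((t,l)::r))) as [Hi Hd].
      { destruct (dom_ex s l Hs) as [e He]. exists e. exact He. }
      split; auto.
Qed.

Lemma edge_names st1 st2 a d : vstack st1 -> vstack st2 -> a <> d ->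
  names st1 a = names st2 a -> names st1 d = names st2 d ->
  edge (top st1) a d = edge (top st2) a d.
Proof. intros H1 H2 Had Ea Ed.
  destruct (classic (names st1 a = names st1 d)) as [Eq|Ne].
  - assert (Eq2 : names st2 a = names st2 d) by congruence.
    apply (IE_EN st1 H1) in Eq. apply (IE_EN st2 H2) in Eq2.
    assert (K : forall st, vstack st -> E W a d (top st) -> edge (top st) a d = dom (names st a)).
    { intros st Hv HE. destruct (DOM st Hv a) as [Hi Hd].
      apply (domU W _ _ (edge (top st) a d)); auto.
      apply E_idatom; auto. apply vstack_inB; auto.
      apply edge_atom; auto. apply vstack_inB; auto. apply le_c_one. }
    rewrite (K st1), (K st2); auto. congruence.
  - rewrite (INV st1), (INV st2); auto; congruence.
Qed.

Lemma tri_eq_edges (t t' : tri W) : (forall a d, a <> d -> edge t a d = edge t' a d) -> t = t'.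
Proof. intros H. apply functional_extensionality_dep. intros x.
  destruct x; [apply (H I1 I2) | apply (H I0 I2) | apply (H I0 I1)]; congruence. Qed.

End Names.

End P3.
Import P3.
Module P4.

Section Trails.
Variable W : WA.
Local Notation emi := excluded_middle_informative.
Local Notation names := (names W).
Local Notation vstack := (vstack W).
Local Notation top := (top W).
Local Notation i1 := (id1 W).
Local Notation elt := (tri W * I3)%type.

Definition pushR (st : list elt) (t : tri W) : list elt :=
  match st with
  | (s, l1) :: (t', l2) :: rest => if emi (t = t' /\ l1 = l2) then rest else st
  | _ => st
  end.
Definition push (st : list elt) (x : elt) : list elt := x :: pushR st (fst x).
Definition stk (p : list elt) : list elt := fold_left push p [].

Fixpoint red_ok (st : list elt) : Prop :=
  match st with
  | [] => True
  | x :: r => (match r with (y, l) :: (z, l') :: _ => ~ (fst x = z /\ l = l') | _ => True end) /\ red_ok r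
  end.

Lemma stk_snoc l x : stk (l ++ [x]) = push (stk l) x.
Proof. unfold stk. rewrite fold_left_app. reflexivity. Qed.

Lemma red_ok_tail x r : red_ok (x :: r) -> red_ok r.
Proof. simpl; tauto. Qed.

Lemma red_ok_push st x : red_ok st -> red_ok (push st x).
Proof. intros H. unfold push, pushR.
  destruct st as [|[s l1] [|[t' l2] rest]]; simpl; auto.
  destruct (emi _) as [[E1 E2]|Hn].
  - destruct H as [_ [H2 H3]]. split; auto.
    destruct rest as [|[y l] [|[z l'] r']]; auto. simpl in H2. subst. auto.
  - split; auto. Qed.

Lemma red_ok_stk_gen p st : red_ok st -> red_ok (fold_left push p st).
Proof. revert st. induction p; simpl; auto. intros st H. apply IHp, red_ok_push; auto. Qed.
Lemma red_ok_stk p : red_ok (stk p).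
Proof. apply red_ok_stk_gen. simpl; auto. Qed.

Lemma cancel3 st ti lam s ki : red_ok st ->
  push (push (push st (ti, lam)) (s, lam)) (ti, ki) = push st (ti, ki).
Proof. intros Hr. unfold push. simpl fst.
  destruct st as [|[u m] [|[w m'] [|[w2 m2] [|[w3 m3] r3]]]]; simpl in Hr;
  repeat (simpl; match goal with |- context [emi ?P] => destruct (emi P) as [[? ?]|?]; subst end);
  try reflexivity; try (exfalso; tauto); try (exfalso; intuition congruence).
Qed.
Lemma stk_ap_a l1 ti lam s ki l2 :
  stk (l1 ++ (ti,lam)::(s,lam)::(ti,ki)::l2) = stk (l1 ++ (ti,ki)::l2).
Proof. unfold stk. rewrite !fold_left_app. simpl. rewrite cancel3; auto. apply red_ok_stk. Qed.

Definition dflt : elt := (fun _ => i1, I0).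
Definition lastidx (p : list elt) : I3 := snd (last p dflt).

Lemma last_indep (l : list elt) (x y : elt) : l <> [] -> last l x = last l y.
Proof. induction l as [|a l IH]; intros H; [congruence|]. destruct l; simpl; auto. apply IH. discriminate. Qed.
Lemma last_cons (y : elt) r x : last (y :: r) x = last r y.
Proof. destruct r as [|z r]; [reflexivity|]. change (last (z::r) x = last (z::r) y).
  apply last_indep. discriminate. Qed.
Lemma last_app_ne (l1 l2 : list elt) d : l2 <> [] -> last (l1 ++ l2) d = last l2 d.
Proof. induction l1; intros H; simpl; auto. rewrite <- IHl1 by auto.
  destruct (l1 ++ l2) eqn:E. destruct l1; destruct l2; simpl in *; congruence. reflexivity. Qed.

Lemma vf_app x r r' : valid_from W x (r ++ r') <-> valid_from W x r /\ valid_from W (last r x) r'.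
Proof. revert x. induction r as [|y r IH]; intros x.
  - simpl. tauto.
  - rewrite last_cons. cbn [app valid_from]. rewrite IH. tauto. Qed.

Definition jn (z x : elt) : Prop := inB W (fst x) /\ fst z <> fst x /\ T W (snd z) (fst z) (fst x).

Lemma trail_snoc l x : l <> [] -> (is_trail W (l ++ [x]) <-> is_trail W l /\ jn (last l dflt) x).
Proof. intros Hl. destruct l as [|y l']; [congruence|].
  change (is_trail W ((y::l') ++ [x])) with (inB W (fst y) /\ valid_from W y (l' ++ [x])).
  change (is_trail W (y::l')) with (inB W (fst y) /\ valid_from W y l').
  rewrite vf_app, last_cons. cbn [valid_from]. unfold jn. tauto. Qed.

Lemma trail_single x : is_trail W [x] <-> inB W (fst x).
Proof. simpl. tauto. Qed.

Lemma vstack_stk p : is_trail W p -> vstack (stk p) /\ exists rest, stk p = last p dflt :: rest.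
Proof. induction p as [|x l IH] using rev_ind; intros Hp; [destruct Hp|].
  rewrite stk_snoc, last_last. unfold push.
  destruct l as [|y l'] eqn:El.
  - simpl. destruct x as [s k]. split; [|eauto]. simpl in Hp. tauto.
  - rewrite <- El in *. apply trail_snoc in Hp; [|subst; discriminate]. destruct Hp as [Hl Hj].
    destruct (IH Hl) as [Hv [rest Hr]]. rewrite Hr in *.
    remember (last l dflt) as z. destruct z as [t k]. unfold jn in Hj. simpl in Hj.
    destruct Hj as [Hx [Hne HT]].
    destruct rest as [|[t' l2] rest'].
    + simpl. split; [|eauto]. destruct x as [s k0]; simpl in *. tauto.
    + simpl pushR. destruct (emi (fst x = t' /\ k = l2)) as [[E1 E2]|Hn].
      * split; [|eauto]. destruct x as [s k0]; simpl in E1; subst.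
        destruct rest' as [|[t'' l3] r'']; simpl in *; tauto.
      * split; [|eauto]. destruct x as [s k0]. simpl in *. tauto.
Qed.

Lemma lastidx_snoc l x : lastidx (l ++ [x]) = snd x.
Proof. unfold lastidx. rewrite last_last. reflexivity. Qed.

Theorem N_inv p q : approx W p q -> names (stk p) (lastidx p) = names (stk q) (lastidx q).
Proof.
  induction 1.
  - reflexivity.
  - auto.
  - congruence.
  - rewrite stk_ap_a. f_equal. unfold lastidx. rewrite !last_app_ne by discriminate.
    reflexivity.
  - replace (l ++ [(tn, lam); (s, nu)]) with ((l ++ [(tn,lam)]) ++ [(s,nu)])
      by (rewrite <- app_assoc; reflexivity).
    rewrite !lastidx_snoc, !stk_snoc. simpl snd. unfold push. simpl fst.
    generalize (pushR (stk l) tn) as R. intros R.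
    destruct R as [|[w m] R'].
    + simpl pushR. rewrite (names_step W). destruct (I3_eq_dec nu lam); [congruence|].
      apply names_idx.
    + simpl pushR. destruct (emi (s = w /\ lam = m)) as [[-> <-]|Hn].
      * rewrite (names_step W tn nu w lam R'). destruct (I3_eq_dec nu lam); [congruence|].
        apply names_idx.
      * rewrite (names_step W s nu tn lam). destruct (I3_eq_dec nu lam); [congruence|].
        apply names_idx.
  - rewrite !lastidx_snoc, !stk_snoc. simpl snd. unfold push. simpl fst.
    destruct (vstack_stk _ H0) as [Hv _]. rewrite stk_snoc in Hv. unfold push in Hv. simpl fst in Hv.
    rewrite (names_idx W tn kn lam). apply (IE_EN W _ Hv). simpl. exact H.
Qed.
End Trails.

End P4.
Import P4.
Module P5.

Section Main.
Variable W : WA.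
Hypothesis Hat : atomic W.
Local Notation elt := (tri W * I3)%type.

Lemma setlast_snoc (l : list elt) t k k' : setlast W (l ++ [(t,k)]) k' = l ++ [(t,k')].
Proof. induction l as [|x l IH]; [reflexivity|]. simpl.
  destruct (l ++ [(t,k)]) eqn:E. destruct l; discriminate.
  rewrite <- IH. destruct x. reflexivity. Qed.

Lemma trail_idx (l : list elt) t k k' : is_trail W (l ++ [(t,k)]) -> is_trail W (l ++ [(t,k')]).
Proof. destruct l as [|y l'].
  - simpl; tauto.
  - intros H. apply trail_snoc in H; [|discriminate]. apply trail_snoc; [discriminate|].
    destruct H as [H1 H2]; split; auto. Qed.

Lemma UB_eq (x y : UB W) : proj1_sig x = proj1_sig y -> x = y.
Proof. destruct x as [x hx], y as [y hy]. simpl. intros ->. f_equal. apply proof_irrelevance. Qed.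

Lemma cls_eq q1 q2 : approx W q1 q2 -> cls W q1 = cls W q2.
Proof. intros H. apply functional_extensionality. intros r. apply propositional_extensionality.
  unfold cls. split; intros H'. exact (ap_trans W _ _ _ (ap_sym W _ _ H) H'). exact (ap_trans W _ _ _ H H'). Qed.

Lemma cls_approx q1 q2 : is_trail W q2 -> cls W q1 = cls W q2 -> approx W q1 q2.
Proof. intros Hq E0. assert (H : cls W q2 q2) by (apply ap_refl; auto). rewrite <- E0 in H. exact H. Qed.

Definition mkU (q : list elt) (Hq : is_trail W q) : UB W :=
  exist _ (cls W q) (ex_intro _ q (conj Hq eq_refl)).

Lemma Rt_dec t v : Rt W t v -> exists l k, is_trail W (l ++ [(t,k)]) /\
  forall a, proj1_sig (v a) = cls W (l ++ [(t,a)]).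
Proof. intros [p [Hp [[l [k ->]] Hv]]]. exists l, k. split; auto.
  intros a. rewrite Hv, setlast_snoc. reflexivity. Qed.

Lemma stk_top (l : list elt) t k : is_trail W (l ++ [(t,k)]) ->
  vstack W (stk W (l ++ [(t,k)])) /\ top W (stk W (l ++ [(t,k)])) = t.
Proof. intros H. destruct (vstack_stk W _ H) as [Hv [rest Hr]]. split; auto.
  rewrite Hr, last_last. reflexivity. Qed.

Lemma names_cls l1 t1 k1 l2 t2 k2 a :
  is_trail W (l1 ++ [(t1,k1)]) -> is_trail W (l2 ++ [(t2,k2)]) ->
  cls W (l1 ++ [(t1,a)]) = cls W (l2 ++ [(t2,a)]) ->
  names W (stk W (l1 ++ [(t1,k1)])) a = names W (stk W (l2 ++ [(t2,k2)])) a.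
Proof. intros H1 H2 E0. apply cls_approx in E0; [|exact (trail_idx l2 t2 k2 a H2)].
  apply N_inv in E0. rewrite !lastidx_snoc in E0. simpl in E0.
  rewrite !stk_snoc in *. unfold push in *. simpl fst in *.
  rewrite (names_idx W t1 k1 a), (names_idx W t2 k2 a). exact E0. Qed.

Lemma names_N (l : list elt) t k a :
  names W (stk W (l ++ [(t,k)])) a = names W (stk W (l ++ [(t,a)])) (lastidx W (l ++ [(t,a)])).
Proof. rewrite lastidx_snoc, !stk_snoc. unfold push. simpl. apply (names_idx W t k a). Qed.

Lemma Rt_inB t v : Rt W t v -> inB W t.
Proof. intros H. destruct (Rt_dec t v H) as [l [k [Hp _]]].
  destruct (stk_top l t k Hp) as [Hv Ht]. pose proof (vstack_inB W _ Hv) as K. rewrite Ht in K. exact K. Qed.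

Lemma Rt_edge t v t' u a d : Rt W t v -> Rt W t' u -> a <> d -> v a = u a -> v d = u d ->
  edge W t a d = edge W t' a d.
Proof. intros H1 H2 Had Ea Ed.
  destruct (Rt_dec t v H1) as [l1 [k1 [Hp1 Hv1]]].
  destruct (Rt_dec t' u H2) as [l2 [k2 [Hp2 Hv2]]].
  destruct (stk_top l1 t k1 Hp1) as [Hs1 Ht1]. destruct (stk_top l2 t' k2 Hp2) as [Hs2 Ht2].
  assert (K : edge W (top W (stk W (l1 ++ [(t,k1)]))) a d = edge W (top W (stk W (l2 ++ [(t',k2)]))) a d).
  { apply (edge_names W Hat); auto.
    - apply names_cls; [exact Hp1|exact Hp2|]. rewrite <- Hv1, <- Hv2, Ea. reflexivity.
    - apply names_cls; [exact Hp1|exact Hp2|]. rewrite <- Hv1, <- Hv2, Ed. reflexivity. }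
  rewrite Ht1, Ht2 in K. exact K. Qed.

Lemma Rt_disj t t' v : Rt W t v -> Rt W t' v -> t = t'.
Proof. intros H1 H2. apply (tri_eq_edges W). intros a d Had. exact (Rt_edge t v t' v a d H1 H2 Had eq_refl eq_refl). Qed.

Lemma Rt_diag t v a d : Rt W t v -> v a = v d -> E W a d t.
Proof. intros H Eq. destruct (Rt_dec t v H) as [l [k [Hp Hv]]].
  destruct (stk_top l t k Hp) as [Hs Ht].
  assert (K : E W a d (top W (stk W (l ++ [(t,k)])))); [|rewrite Ht in K; exact K].
  apply (IE_EN W _ Hs). rewrite (names_N l t k a), (names_N l t k d). apply N_inv. apply cls_approx. exact (trail_idx l t k d Hp).
  rewrite <- !Hv, Eq. reflexivity. Qed.

Lemma Rt_E_diag t v a d : Rt W t v -> E W a d t -> v a = v d.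
Proof. intros H HE. destruct (Rt_dec t v H) as [l [k [Hp Hv]]]. apply UB_eq. rewrite !Hv.
  apply cls_eq. apply ap_c; [exact HE|exact (trail_idx l t k a Hp)|exact (trail_idx l t k d Hp)]. Qed.

Lemma Rt_nonempty t : inB W t -> exists v, Rt W t v.
Proof. intros Ht. assert (Hq : forall a, is_trail W [(t,a)]) by (intros; split; [exact Ht|exact I]).
  exists (fun a => mkU [(t,a)] (Hq a)). exists [(t,I0)]. split; [exact (Hq I0)|]. split.
  exists [], I0. reflexivity. intros k. reflexivity. Qed.

Lemma Rt_move t v k x : Rt W t v -> T W k t x -> inB W x ->
  exists u, Rt W x u /\ forall l, l <> k -> u l = v l.
Proof. intros H HT Hx. destruct (classic (x = t)) as [->|Hne]. exists v; split; [exact H|reflexivity].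
  destruct (Rt_dec t v H) as [l0 [k0 [Hp Hv]]].
  assert (Hq : forall a, is_trail W ((l0 ++ [(t,k)]) ++ [(x,a)])).
  { intros a. apply trail_snoc. destruct l0; discriminate. split. exact (trail_idx l0 t k0 k Hp).
    rewrite last_last. unfold jn. simpl. split; [exact Hx|split; [intro E0; apply Hne; symmetry; exact E0|exact HT]]. }
  exists (fun a => mkU _ (Hq a)). split.
  - exists ((l0 ++ [(t,k)]) ++ [(x,I0)]). split; [exact (Hq I0)|]. split. eexists _, _; reflexivity.
    intros a. simpl. rewrite setlast_snoc. reflexivity.
  - intros l Hl. apply UB_eq. simpl. rewrite Hv. apply cls_eq.
    rewrite <- app_assoc. simpl. apply ap_b. intro E0; apply Hl; symmetry; exact E0.
    replace (l0 ++ [(t, k); (x, l)]) with ((l0 ++ [(t,k)]) ++ [(x,l)]) by (rewrite <- app_assoc; reflexivity). apply Hq.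
    exact (trail_idx l0 t k0 l Hp). Qed.
End Main.

End P5.
Import P5.
Module P6.

Section Auto.
Variable W : WA.
Local Notation elt := (tri W * I3)%type.
Local Notation dflt := (dflt W).
Local Notation jn := (jn W).

Definition start (r : list elt) : tri W := fst (hd dflt r).

Lemma trail_app (l r : list elt) : l <> [] -> r <> [] ->
  (is_trail W (l ++ r) <-> is_trail W l /\ is_trail W r /\ jn (last l dflt) (hd dflt r)).
Proof. intros Hl Hr. destruct l as [|y l']; [congruence|]. destruct r as [|z r']; [congruence|].
  change (is_trail W ((y::l') ++ z::r')) with (inB W (fst y) /\ valid_from W y (l' ++ z::r')).
  change (is_trail W (y::l')) with (inB W (fst y) /\ valid_from W y l').
  change (is_trail W (z::r')) with (inB W (fst z) /\ valid_from W z r').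
  rewrite vf_app, last_cons. cbn [valid_from hd]. unfold P4.jn. tauto. Qed.

Lemma T_sym k s t : T W k s t -> T W k t s.
Proof. intros [H1 [H2 H3]]. split; auto. Qed.

Lemma approx_trail p q : approx W p q -> is_trail W p /\ is_trail W q.
Proof. induction 1; tauto. Qed.

Lemma start_app (l r : list elt) : l <> [] -> start (l ++ r) = start l.
Proof. destruct l; [congruence|]. reflexivity. Qed.

Lemma approx_start p q : approx W p q -> start p = start q.
Proof. induction 1; auto; try congruence.
  - destruct l1; [reflexivity|]. reflexivity.
  - destruct l; reflexivity.
  - destruct l; reflexivity. Qed.

Lemma TR_a l1 ti lam s ki l2 : is_trail W (l1 ++ (ti,lam)::(s,lam)::(ti,ki)::l2) ->
  is_trail W (l1 ++ (ti,ki)::l2).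
Proof. destruct l1 as [|y l1'].
  - simpl. tauto.
  - intros H. change (is_trail W ((y::l1') ++ (ti,ki)::l2)) with (inB W (fst y) /\ valid_from W y (l1' ++ (ti,ki)::l2)).
    change (is_trail W ((y::l1') ++ (ti,lam)::(s,lam)::(ti,ki)::l2)) with
      (inB W (fst y) /\ valid_from W y (l1' ++ (ti,lam)::(s,lam)::(ti,ki)::l2)) in H.
    rewrite vf_app in *. simpl in *. tauto. Qed.

Fixpoint back (P : list elt) : list elt :=
  match P with
  | x :: ((y :: _) as r) => back r ++ [(fst y, snd x)]
  | _ => []
  end.

Lemma removelast_cons2 (x y : elt) r : removelast (x :: y :: r) = x :: removelast (y :: r).
Proof. reflexivity. Qed.

Lemma trail_tail (x : elt) r : r <> [] -> is_trail W (x :: r) -> is_trail W r.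
Proof. destruct r as [|y r']; [congruence|]. simpl. tauto. Qed.

Lemma good_back P : is_trail W P -> forall Q r, is_trail W Q -> fst (last Q dflt) = fst (last P dflt) ->
  is_trail W r -> start r = start P -> is_trail W (removelast Q ++ back P ++ r).
Proof.
  induction P as [|x P IH]; intros HP Q r HQ HQP Hr Hs; [destruct HP|].
  destruct P as [|y R].
  - simpl back. rewrite app_nil_l. destruct r as [|z r']; [destruct Hr|].
    assert (HQne : Q <> []) by (intro; subst; destruct HQ).
    rewrite (app_removelast_last dflt HQne) in HQ.
    destruct (removelast Q) as [|q0 q'] eqn:Eq.
    + exact Hr.
    + rewrite <- Eq in *. apply trail_app in HQ; [|rewrite Eq; discriminate|discriminate].
      apply trail_app; [rewrite Eq; discriminate|discriminate|]. destruct HQ as [H1 [H2 H3]].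
      split; auto. split; auto. unfold P4.jn in *. simpl in *. unfold start in Hs. simpl in Hs.
      rewrite Hs, <- HQP. exact H3.
  - change (back (x :: y :: R)) with (back (y :: R) ++ [(fst y, snd x)]).
    rewrite <- app_assoc. simpl app at 2.
    assert (HyR : is_trail W (y :: R)) by (eapply trail_tail; [discriminate|exact HP]).
    apply IH; auto.
    + destruct HP as [Hx [Hy [Hne [HT _]]]]. destruct r as [|z r']; [destruct Hr|].
      unfold start in Hs; simpl in Hs.
      split; [exact Hy|]. simpl. split; [apply Hr|]. split. rewrite Hs. intro E0; apply Hne; auto.
      split. rewrite Hs. apply T_sym. exact HT. apply Hr.
Qed.
Lemma BF P : is_trail W P -> forall L X, X <> [] -> start X = fst (last P dflt) ->
  is_trail W (L ++ back P ++ removelast P ++ X) -> approx W (L ++ back P ++ removelast P ++ X) (L ++ X).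
Proof.
  induction P as [|x P IH]; intros HP L X HX Hs Ht; [destruct HP|].
  destruct P as [|y R].
  - simpl in *. apply ap_refl. exact Ht.
  - assert (HyR : is_trail W (y :: R)) by (eapply trail_tail; [discriminate|exact HP]).
    change (back (x :: y :: R)) with (back (y :: R) ++ [(fst y, snd x)]) in *.
    rewrite removelast_cons2 in *.
    assert (HZ : exists kz Z', removelast (y :: R) ++ X = (fst y, kz) :: Z').
    { destruct R as [|z R'].
      - simpl. destruct X as [|[xt xk] X']; [congruence|]. exists xk, X'. unfold start in Hs. simpl in *. subst. reflexivity.
      - simpl. destruct y as [yt yk]. exists yk, (removelast (z :: R') ++ X). reflexivity. }
    destruct HZ as [kz [Z' HZ]].
    assert (E1 : L ++ (back (y :: R) ++ [(fst y, snd x)]) ++ (x :: removelast (y :: R)) ++ X =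
                 (L ++ back (y :: R)) ++ (fst y, snd x) :: (fst x, snd x) :: (fst y, kz) :: Z').
    { rewrite <- HZ. destruct x. rewrite <- !app_assoc. reflexivity. }
    rewrite E1 in *.
    eapply ap_trans. apply ap_a; [exact Ht|]. eapply TR_a; exact Ht.
    rewrite <- app_assoc. rewrite <- HZ. apply IH; auto.
    rewrite app_assoc, HZ. eapply TR_a. exact Ht.
Qed.

Lemma FB P : is_trail W P -> forall L X, X <> [] -> start X = start P ->
  is_trail W (L ++ removelast P ++ back P ++ X) -> approx W (L ++ removelast P ++ back P ++ X) (L ++ X).
Proof.
  induction P as [|x P IH]; intros HP L X HX Hs Ht; [destruct HP|].
  destruct P as [|y R].
  - simpl in *. apply ap_refl. exact Ht.
  - assert (HyR : is_trail W (y :: R)) by (eapply trail_tail; [discriminate|exact HP]).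
    change (back (x :: y :: R)) with (back (y :: R) ++ [(fst y, snd x)]) in *.
    rewrite removelast_cons2 in *.
    destruct X as [|[xt xk] X']; [congruence|]. unfold start in Hs. simpl in Hs. subst xt.
    assert (E1 : L ++ (x :: removelast (y :: R)) ++ (back (y :: R) ++ [(fst y, snd x)]) ++ (fst x, xk) :: X' =
                 (L ++ [x]) ++ removelast (y :: R) ++ back (y :: R) ++ ((fst y, snd x) :: (fst x, xk) :: X')).
    { rewrite <- !app_assoc. reflexivity. }
    rewrite E1 in *.
    assert (H1 := IH HyR (L ++ [x]) ((fst y, snd x) :: (fst x, xk) :: X') ltac:(discriminate) eq_refl Ht).
    eapply ap_trans. exact H1.
    assert (E2 : (L ++ [x]) ++ (fst y, snd x) :: (fst x, xk) :: X' = L ++ (fst x, snd x) :: (fst y, snd x) :: (fst x, xk) :: X').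
    { destruct x. rewrite <- app_assoc. reflexivity. }
    rewrite E2. apply ap_a. rewrite <- E2. apply (approx_trail _ _ H1). eapply TR_a. rewrite <- E2. apply (approx_trail _ _ H1).
Qed.

Lemma prefix_cong (pre : list elt) a : (forall r, is_trail W r -> start r = a -> is_trail W (pre ++ r)) ->
  forall r r', approx W r r' -> start r = a -> approx W (pre ++ r) (pre ++ r').
Proof. intros Hg r r' H. induction H; intros Hs.
  - apply ap_refl. auto.
  - apply ap_sym. apply IHapprox. rewrite (approx_start _ _ H). auto.
  - eapply ap_trans. apply IHapprox1; auto. apply IHapprox2. rewrite <- (approx_start _ _ H). auto.
  - rewrite !app_assoc. apply ap_a; rewrite <- !app_assoc; apply Hg; auto.
    rewrite <- Hs. destruct l1; reflexivity.
  - rewrite !app_assoc. apply ap_b; auto; rewrite <- !app_assoc; apply Hg; auto.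
    rewrite <- Hs. destruct l; reflexivity.
  - rewrite !app_assoc. apply ap_c; auto; rewrite <- !app_assoc; apply Hg; auto.
    rewrite <- Hs. destruct l; reflexivity.
Qed.
End Auto.

End P6.
Import P6.
Module P7.

Section Phi.
Variable W : WA.
Local Notation elt := (tri W * I3)%type.
Local Notation dflt := (dflt W).
Local Notation emi := excluded_middle_informative.
Local Notation start := (start W).

Section Gen.
Variables (a b : tri W) (pre1 pre2 : list elt).
Hypothesis g1 : forall r, is_trail W r -> start r = a -> is_trail W (pre1 ++ r).
Hypothesis g2 : forall r, is_trail W r -> start r = b -> is_trail W (pre2 ++ r).

Definition pf (r : list elt) : list elt :=
  if emi (start r = a) then pre1 else if emi (start r = b) then pre2 else [].
Definition Phi (r : list elt) : list elt := pf r ++ r.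

Lemma Phi_trail r : is_trail W r -> is_trail W (Phi r).
Proof. intros H. unfold Phi, pf. destruct (emi _); auto. destruct (emi _); auto. Qed.

Lemma Phi_cong r r' : approx W r r' -> approx W (Phi r) (Phi r').
Proof. intros H. assert (Hs := approx_start W _ _ H). unfold Phi, pf. rewrite <- Hs.
  destruct (emi _) as [E1|E1]. apply (prefix_cong W pre1 a); auto.
  destruct (emi _) as [E2|E2]. apply (prefix_cong W pre2 b); auto.
  exact H. Qed.

Lemma pf_snoc (l : list elt) t k k' : pf (l ++ [(t,k)]) = pf (l ++ [(t,k')]).
Proof. unfold pf. replace (start (l ++ [(t,k')])) with (start (l ++ [(t,k)])); [reflexivity|].
  destruct l; reflexivity. Qed.

Definition PiC (C : list elt -> Prop) : list elt -> Prop :=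
  fun r' => exists r, C r /\ approx W (Phi r) r'.

Lemma Pi_cls r0 : is_trail W r0 -> PiC (cls W r0) = cls W (Phi r0).
Proof. intros H0. apply functional_extensionality. intros r'. apply propositional_extensionality.
  unfold PiC, cls. split.
  - intros [r [H1 H2]]. eapply ap_trans. apply Phi_cong. exact H1. exact H2.
  - intros H. exists r0. split; auto. apply ap_refl; auto. Qed.

Definition piU (c : UB W) : UB W.
Proof. refine (exist _ (PiC (proj1_sig c)) _). destruct c as [C [r0 [Hr0 E0]]]. simpl.
  exists (Phi r0). split. apply Phi_trail; auto. subst. apply Pi_cls; auto. Defined.

Lemma piU_val c : proj1_sig (piU c) = PiC (proj1_sig c).
Proof. reflexivity. Qed.

Lemma piU_R t u : Rt W t u -> Rt W t (fun x => piU (u x)).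
Proof. intros H. destruct (Rt_dec W t u H) as [l [k [Hp Hv]]].
  exists ((pf (l ++ [(t,k)]) ++ l) ++ [(t,k)]). split.
  { rewrite <- app_assoc. apply Phi_trail. exact Hp. }
  split. eexists _, _; reflexivity.
  intros x. rewrite piU_val, Hv, setlast_snoc, Pi_cls by (exact (trail_idx W l t k x Hp)).
  unfold Phi. rewrite (pf_snoc l t x k), app_assoc. reflexivity. Qed.
End Gen.

Section Inv.
Variables (a b : tri W) (pre1 pre2 : list elt).
Hypothesis s1 : forall r, is_trail W r -> start r = a -> start (pre1 ++ r) = b.
Hypothesis s2 : forall r, is_trail W r -> start r = b -> start (pre2 ++ r) = a.
Hypothesis c1 : forall r, is_trail W r -> start r = a -> approx W (pre2 ++ pre1 ++ r) r.
Hypothesis c2 : forall r, is_trail W r -> start r = b -> approx W (pre1 ++ pre2 ++ r) r.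

Lemma Phi_inv r : is_trail W r -> approx W (Phi b a pre2 pre1 (Phi a b pre1 pre2 r)) r.
Proof. intros H. unfold Phi at 2, pf.
  destruct (emi (start r = a)) as [Ea|Na].
  - unfold Phi, pf. rewrite (s1 r H Ea). destruct (emi (b = b)) as [_|C]; [|congruence]. apply c1; auto.
  - destruct (emi (start r = b)) as [Eb|Nb].
    + unfold Phi, pf. rewrite (s2 r H Eb).
      destruct (emi (a = b)) as [Eab|_]. exfalso. apply Na. congruence.
      destruct (emi (a = a)) as [_|C]; [|congruence]. apply c2; auto.
    + unfold Phi, pf. simpl app. destruct (emi (start r = b)); [contradiction|].
      destruct (emi (start r = a)); [contradiction|]. apply ap_refl; auto.
Qed.
End Inv.
End Phi.

End P7.
Import P7.
Module P8.

Section Surj.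
Variable W : WA.
Local Notation elt := (tri W * I3)%type.
Local Notation dflt := (dflt W).
Local Notation start := (start W).
Local Notation back := (back W).

Lemma back_nil_single (x : elt) : back [x] = [].
Proof. reflexivity. Qed.

Lemma back_hd (x y : elt) R : fst (hd dflt (back (x :: y :: R))) = fst (last (x :: y :: R) dflt).
Proof. revert x y. induction R as [|z R IH]; intros x y.
  - reflexivity.
  - change (back (x :: y :: z :: R)) with (back (y :: z :: R) ++ [(fst y, snd x)]).
    assert (Hne : back (y :: z :: R) <> []).
    { change (back (y :: z :: R)) with (back (z :: R) ++ [(fst z, snd y)]).
      intro E0. apply app_eq_nil in E0. destruct E0; discriminate. }
    assert (Hh : forall (l1 l2 : list elt), l1 <> [] -> hd dflt (l1 ++ l2) = hd dflt l1)
      by (intros [|? ?] ? ?; [congruence|reflexivity]).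
    rewrite Hh by exact Hne. rewrite IH. reflexivity. Qed.

Lemma start_back (P r : list elt) : P <> [] -> r <> [] -> start r = start P ->
  start (back P ++ r) = fst (last P dflt).
Proof. intros HP Hr Hs. destruct P as [|x [|y R]]; [congruence| |].
  - simpl. exact Hs.
  - rewrite start_app. unfold P6.start. apply back_hd.
    change (back (x :: y :: R)) with (back (y :: R) ++ [(fst y, snd x)]).
    intro E0. apply app_eq_nil in E0. destruct E0; discriminate. Qed.

Lemma start_pre (Q P r : list elt) : Q <> [] -> P <> [] -> r <> [] ->
  fst (last Q dflt) = fst (last P dflt) -> start r = start P ->
  start (removelast Q ++ back P ++ r) = start Q.
Proof. intros HQ HP Hr HQP Hs.
  destruct Q as [|q [|q' Q']]; [congruence| |].
  - simpl removelast. rewrite app_nil_l. rewrite start_back by auto. simpl in HQP. rewrite <- HQP. reflexivity.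
  - rewrite removelast_cons2. reflexivity. Qed.

Lemma CL (P1 P2 : list elt) : is_trail W P1 -> is_trail W P2 ->
  fst (last P1 dflt) = fst (last P2 dflt) ->
  forall r, is_trail W r -> start r = start P1 ->
  approx W ((removelast P1 ++ back P2) ++ (removelast P2 ++ back P1) ++ r) r.
Proof. intros H1 H2 Ht r Hr Hs.
  assert (P1ne : P1 <> []) by (intro; subst; destruct H1).
  assert (P2ne : P2 <> []) by (intro; subst; destruct H2).
  assert (rne : r <> []) by (intro; subst; destruct Hr).
  assert (T1 : is_trail W ((removelast P2 ++ back P1) ++ r)).
  { rewrite <- app_assoc. apply good_back; auto. }
  assert (T2 : is_trail W ((removelast P1 ++ back P2) ++ (removelast P2 ++ back P1) ++ r)).
  { rewrite <- app_assoc. apply good_back; auto. rewrite <- app_assoc. apply start_pre; auto. }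
  rewrite <- !app_assoc in *.
  assert (Hx : back P1 ++ r <> []) by (intro E0; apply app_eq_nil in E0; destruct E0; congruence).
  assert (Hsx : start (back P1 ++ r) = fst (last P2 dflt)) by (rewrite start_back; auto).
  assert (B := BF W P2 H2 (removelast P1) (back P1 ++ r) Hx Hsx T2).
  eapply ap_trans. exact B.
  rewrite <- (app_nil_l (removelast P1 ++ back P1 ++ r)). apply FB; auto.
  rewrite app_nil_l. apply (approx_trail W _ _ B).
Qed.
End Surj.

End P8.
Import P8.
Module P9.

Section Final.
Variable W : WA.
Local Notation elt := (tri W * I3)%type.
Local Notation dflt := (dflt W).
Local Notation start := (start W).
Local Notation back := (back W).

Definition Fam (Z : vec W -> Prop) : Prop :=
  forall (pi pi' : UB W -> UB W), (forall c, pi' (pi c) = c) -> (forall c, pi (pi' c) = c) ->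
  (forall t u, Rt W t u -> Rt W t (fun x => pi (u x))) ->
  (forall t u, Rt W t u -> Rt W t (fun x => pi' (u x))) ->
  forall u, Z u -> Z (fun x => pi (u x)).

Lemma Fam_closed : cyl_closed W Fam.
Proof. split; [|split; [|split]].
  - intros G HG pi pi' H1 H2 H3 H4 u [Y [HGY HY]]. exists Y. split; auto. apply (HG Y HGY pi pi'); auto.
  - intros X HX pi pi' H1 H2 H3 H4 u Hu Hc. apply Hu.
    assert (E0 : (fun x => pi' (pi (u x))) = u) by (apply functional_extensionality; intros; apply H1).
    rewrite <- E0. apply (HX pi' pi); auto.
  - intros k X HX pi pi' H1 H2 H3 H4 u [u0 [Hu0 Hagree]].
    exists (fun x => pi (u0 x)). split. apply (HX pi pi'); auto.
    intros l Hl. simpl. rewrite Hagree; auto.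
  - intros k l pi pi' H1 H2 H3 H4 u Hu. unfold Diag in *. rewrite Hu. reflexivity.
Qed.

Lemma Rt_Fam t : Fam (Rt W t).
Proof. intros pi pi' H1 H2 H3 H4 u Hu. apply H3; auto. Qed.

Lemma Rt_trans_C t v w Y : inC W Y -> Rt W t v -> Rt W t w -> Y v -> Y w.
Proof. intros HY Hv Hw HYv.
  destruct (Rt_dec W t v Hv) as [l1 [k1 [Hp1 Hv1]]].
  destruct (Rt_dec W t w Hw) as [l2 [k2 [Hp2 Hw2]]].
  set (P1 := l1 ++ [(t,k1)]) in *. set (P2 := l2 ++ [(t,k2)]) in *.
  set (a := start P1). set (b := start P2).
  set (pre1 := removelast P2 ++ back P1). set (pre2 := removelast P1 ++ back P2).
  assert (HL : fst (last P1 dflt) = fst (last P2 dflt)) by (unfold P1, P2; rewrite !last_last; reflexivity).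
  assert (P1ne : P1 <> []) by (intro E0; rewrite E0 in Hp1; destruct Hp1).
  assert (P2ne : P2 <> []) by (intro E0; rewrite E0 in Hp2; destruct Hp2).
  assert (g1 : forall r, is_trail W r -> start r = a -> is_trail W (pre1 ++ r)).
  { intros r Hr Hs. unfold pre1. rewrite <- app_assoc. apply good_back; auto. }
  assert (g2 : forall r, is_trail W r -> start r = b -> is_trail W (pre2 ++ r)).
  { intros r Hr Hs. unfold pre2. rewrite <- app_assoc. apply good_back; auto. }
  assert (s1 : forall r, is_trail W r -> start r = a -> start (pre1 ++ r) = b).
  { intros r Hr Hs. unfold pre1. rewrite <- app_assoc. apply start_pre; auto.
    intro E0; subst; destruct Hr. }
  assert (s2 : forall r, is_trail W r -> start r = b -> start (pre2 ++ r) = a).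
  { intros r Hr Hs. unfold pre2. rewrite <- app_assoc. apply start_pre; auto.
    intro E0; subst; destruct Hr. }
  assert (c1 : forall r, is_trail W r -> start r = a -> approx W (pre2 ++ pre1 ++ r) r).
  { intros r Hr Hs. apply CL; auto. }
  assert (c2 : forall r, is_trail W r -> start r = b -> approx W (pre1 ++ pre2 ++ r) r).
  { intros r Hr Hs. apply CL; auto. }
  set (pi := piU W a b pre1 pre2 g1 g2). set (pi' := piU W b a pre2 pre1 g2 g1).
  assert (I1 : forall c, pi' (pi c) = c).
  { intros [C [r0 [Hr0 E0]]]. apply UB_eq. unfold pi, pi'. rewrite !piU_val. simpl. subst C.
    rewrite (Pi_cls W a b pre1 pre2 g1 g2 r0 Hr0).
    rewrite (Pi_cls W b a pre2 pre1 g2 g1 _ (Phi_trail W a b pre1 pre2 g1 g2 r0 Hr0)).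
    apply cls_eq. apply Phi_inv; auto. }
  assert (I2 : forall c, pi (pi' c) = c).
  { intros [C [r0 [Hr0 E0]]]. apply UB_eq. unfold pi, pi'. rewrite !piU_val. simpl. subst C.
    rewrite (Pi_cls W b a pre2 pre1 g2 g1 r0 Hr0).
    rewrite (Pi_cls W a b pre1 pre2 g1 g2 _ (Phi_trail W b a pre2 pre1 g2 g1 r0 Hr0)).
    apply cls_eq. apply Phi_inv; auto. }
  assert (R1 : forall t u, Rt W t u -> Rt W t (fun x => pi (u x))) by (intros; apply piU_R; auto).
  assert (R2 : forall t u, Rt W t u -> Rt W t (fun x => pi' (u x))) by (intros; apply piU_R; auto).
  assert (FY : Fam Y) by (apply HY; [apply Fam_closed|intros; apply Rt_Fam]).
  assert (E0 : (fun x => pi (v x)) = w).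
  { apply functional_extensionality. intros x. apply UB_eq. unfold pi. rewrite piU_val, Hv1, Hw2.
    assert (Htx : is_trail W (l1 ++ [(t,x)])) by (apply (trail_idx W l1 t k1 x Hp1)).
    rewrite (Pi_cls W a b pre1 pre2 g1 g2 _ Htx). apply cls_eq.
    assert (Hs : start (l1 ++ [(t,x)]) = a) by (unfold a, P1; destruct l1; reflexivity).
    unfold Phi, pf. destruct (ClassicalEpsilon.excluded_middle_informative _) as [_|C]; [|contradiction].
    assert (RL1 : removelast P1 = l1) by (unfold P1; apply removelast_last).
    assert (RL2 : removelast P2 = l2) by (unfold P2; apply removelast_last).
    assert (Tr : is_trail W (l2 ++ back P1 ++ removelast P1 ++ [(t,x)])).
    { rewrite RL1, <- RL2, app_assoc. apply g1; auto. }
    assert (Hst : start [(t,x)] = fst (last P1 dflt)) by (unfold P1; rewrite last_last; reflexivity).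
    assert (B := BF W P1 Hp1 l2 [(t,x)] ltac:(discriminate) Hst Tr). rewrite RL1 in B.
    unfold pre1. rewrite RL2, <- app_assoc. exact B. }
  rewrite <- E0. apply (FY pi pi'); auto.
Qed.
End Final.

End P9.
Import P9.

Lemma comp_from_edges (W : WA) k (y x : tri W) :
  (forall a d, a <> k -> d <> k -> a <> d -> edge W y a d = edge W x a d) -> y k = x k.
Proof. intros H. destruct k; [apply (H I1 I2) | apply (H I0 I2) | apply (H I0 I1)]; congruence. Qed.

Theorem theorem4 (W : WA) (Hat : atomic W) : Rmap_iso W.
Proof.
  unfold Rmap_iso.
  split; [|split; [|split; [|split; [|split; [|split; [|split; [|split; [|split]]]]]]]].
  - intros X HX. split.
    + intros F HF HR. destruct HF as [Hu _].
      assert (E0 : Rmap W X = fun v => exists Y, (fun Y => exists t, X t /\ Y = Rt W t) Y /\ Y v).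
      { apply functional_extensionality. intros v. apply propositional_extensionality. split.
        - intros [t [Xt Rv]]. exists (Rt W t). split; eauto.
        - intros [Y [[t [Xt ->]] Yv]]. exists t; auto. }
      rewrite E0. apply Hu. intros Y [t [Xt ->]]. apply HR. apply HX; auto.
    + intros v [t [Xt Rv]]. exists t. split; auto.
  - intros X Y HX HY E0. apply functional_extensionality. intros t. apply propositional_extensionality.
    split; intros H.
    + destruct (Rt_nonempty W t (HX t H)) as [v Hv].
      assert (H0 : Rmap W X v) by (exists t; auto). rewrite E0 in H0.
      destruct H0 as [t' [Yt' Hv']]. rewrite (Rt_disj W Hat t t' v Hv Hv'). auto.
    + destruct (Rt_nonempty W t (HY t H)) as [v Hv].
      assert (H0 : Rmap W Y v) by (exists t; auto). rewrite <- E0 in H0.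
      destruct H0 as [t' [Xt' Hv']]. rewrite (Rt_disj W Hat t t' v Hv Hv'). auto.
  - intros Y [HC HV]. exists (fun t => inB W t /\ forall v, Rt W t v -> Y v). split.
    + intros t [Ht _]. auto.
    + apply functional_extensionality. intros v. apply propositional_extensionality. split.
      * intros [t [[_ H] Rv]]; auto.
      * intros Yv. destruct (HV v Yv) as [t [Ht Rv]]. exists t. split; auto. split; auto.
        intros w Rw. exact (Rt_trans_C W t v w Y HC Rv Rw Yv).
  - intros X Y HX HY. apply functional_extensionality. intros v. apply propositional_extensionality.
    unfold Rmap, Cm_union, Rc_union. split.
    + intros [t [[Xt|Yt] Rv]]; [left|right]; exists t; split; assumption.
    + intros [[t [Xt Rv]]|[t [Yt Rv]]]; exists t; split; [left|assumption|right|assumption]; assumption.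
  - intros X Y HX HY. apply functional_extensionality. intros v. apply propositional_extensionality.
    unfold Rmap, Cm_inter, Rc_inter. split.
    + intros [t [[Xt Yt] Rv]]. split; exists t; split; assumption.
    + intros [[t [Xt Rv]] [t' [Yt' Rv']]]. rewrite <- (Rt_disj W Hat t t' v Rv Rv') in Yt'.
      exists t. auto.
  - intros X HX. apply functional_extensionality. intros v. apply propositional_extensionality.
    unfold Rmap, Cm_compl, Rc_compl, VB. split.
    + intros [t [[Ht NX] Rv]]. split. exists t; auto.
      intros [t' [Xt' Rv']]. rewrite <- (Rt_disj W Hat t t' v Rv Rv') in Xt'. auto.
    + intros [[t [Ht Rv]] N]. exists t. split; auto. split; auto. intro Xt. apply N. exists t; auto.
  - apply functional_extensionality. intros v. apply propositional_extensionality.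
    unfold Rmap, Cm_empty, Rc_empty. firstorder.
  - reflexivity.
  - intros k X HX. apply functional_extensionality. intros v. apply propositional_extensionality.
    unfold Rmap, Tstar, Rc_cyl, Cyl. split.
    + intros [y [[Hy [x [Xx HT]]] Rv]]. split. exists y; auto.
      destruct (Rt_move W y v k x Rv HT (HX x Xx)) as [u [Ru Hu]].
      exists u. split. exists x; auto. exact Hu.
    + intros [[y [Hy Rv]] [u [[x [Xx Ru]] Hu]]]. exists y. split; auto. split; auto.
      exists x. split; auto. split; auto. split. apply HX; auto.
      apply comp_from_edges. intros a d Ha Hd Had.
      apply (Rt_edge W Hat y v x u a d Rv Ru Had); symmetry; auto.
  - intros k l. apply functional_extensionality. intros v. apply propositional_extensionality.
    unfold Rmap, Rc_diag, Diag. split.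
    + intros [t [HE Rv]]. split. exists t. split; auto. destruct HE; auto.
      apply (Rt_E_diag W t v k l Rv HE).
    + intros [[t [Ht Rv]] Hd]. exists t. split; auto. apply (Rt_diag W t v k l Rv Hd).
Qed.
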